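(* Let $(p_k)_{k\ge0}$, $(q_k)_{k\ge0}$ be increasing sequences of positive integers with $p_{2l}<q_{2l}<q_{2l+1}<p_{2l+1}<p_{2l+2}$ for all $l\ge0$, set $p_{-1}=q_{-1}=0$, let $(\epsilon_k)_{k\ge0}$ be a decreasing sequence of positive numbers tending to $0$, and let $\beta_k\to+\infty$. Suppose $$p_k^2e^{-\beta_k\epsilon_k}\to0,\quad q_k^2e^{-\beta_k\epsilon_k}\to0,\quad \beta_k\epsilon_{k+1}\to0,\quad \frac{q_{2l}}{p_{2l}}\to+\infty,\quad \frac{p_{2l+1}}{q_{2l+1}}\to+\infty,$$ and $\sum_{k\ge0}(p_k-p_{k-1})\epsilon_k<\infty$, $\sum_{k\ge0}(q_k-q_{k-1})\epsilon_k<\infty$. Let $H$ be the reduced double-well type potential with $H_n^0=\epsilon_k$ for $p_{k-1}<n\le p_k$ and $H_n^1=\epsilon_k$ for $q_{k-1}<n\le q_k$. Then its Gibbs measures satisfy $\mu_{\beta_{2l}}\to\delta_{0^\infty}$ and $\mu_{\beta_{2l+1}}\to\delta_{1^\infty}$ weak$^*$ as $l\to+\infty$.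
   Context: $\Sigma:=\{0,1\}^{\mathbb N}$. A reduced double-well type potential is a continuous nonnegative $H:\Sigma\to\mathbb R$ with summable variation such that $H=0$ on $[00]\cup[11]$, $H=H_n^0>0$ on $[01^n0]$, $H=H_n^1>0$ on $[10^n1]$ ($n\ge1$), and $\sum_{k\ge1}\sup_{n\ge0}|H_k^i-H_{k+n}^i|<\infty$ ($i=0,1$); such $H$ is determined by the sequences $(H_n^0),(H_n^1)$. Gibbs measure: $\mathcal L_\beta[\Phi](x)=e^{-\beta H(0x)}\Phi(0x)+e^{-\beta H(1x)}\Phi(1x)$; $\Phi_\beta$ its unique positive continuous eigenfunction with $\max\Phi_\beta=1$, eigenvalue $\lambda_\beta$; $\nu_\beta$ the unique probability with $\mathcal L_\beta^*\nu_\beta=\lambda_\beta\nu_\beta$; $\mu_\beta:=\Phi_\beta\nu_\beta/\int\Phi_\beta d\nu_\beta$. *)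

(* Defs.v *)
From Stdlib Require Import Reals Lra Lia.
Open Scope R_scope.

(* Sigma = {0,1}^N, with 0 = false, 1 = true. *)
Definition Sigma := nat -> bool.

Definition scons (b : bool) (x : Sigma) : Sigma :=
  fun n => match n with O => b | S m => x m end.

Definition const_seq (b : bool) : Sigma := fun _ => b.

Definition continuous_Sigma (f : Sigma -> R) : Prop :=
  forall (x : Sigma) (eps : R), 0 < eps ->
    exists N : nat, forall y : Sigma,
      (forall i, (i < N)%nat -> y i = x i) -> Rabs (f y - f x) < eps.

Definition summable_variation (H : Sigma -> R) : Prop :=
  exists v : nat -> R, (forall n, 0 <= v n) /\
    (exists l, infinite_sum v l) /\
    forall (n : nat) (x y : Sigma),
      (forall i, (i < n)%nat -> x i = y i) -> Rabs (H x - H y) <= v n.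

Definition in_cyl_abna (a : bool) (n : nat) (x : Sigma) : Prop :=
  x O = a /\ (forall i, (1 <= i <= n)%nat -> x i = negb a) /\ x (S n) = a.

Definition summable_tail_oscillation (h : nat -> R) : Prop :=
  exists w : nat -> R, (forall k, 0 <= w k) /\
    (exists l, infinite_sum w l) /\
    forall k n : nat, (1 <= k)%nat -> Rabs (h k - h (k + n)%nat) <= w k.

Definition reduced_double_well (H : Sigma -> R) (H0 H1 : nat -> R) : Prop :=
  continuous_Sigma H /\
  (forall x, 0 <= H x) /\
  summable_variation H /\
  (forall x, x O = x 1%nat -> H x = 0) /\
  (forall n x, (1 <= n)%nat -> in_cyl_abna false n x -> H x = H0 n /\ 0 < H0 n) /\
  (forall n x, (1 <= n)%nat -> in_cyl_abna true n x -> H x = H1 n /\ 0 < H1 n) /\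
  summable_tail_oscillation H0 /\
  summable_tail_oscillation H1.

Definition transfer (H : Sigma -> R) (beta : R) (f : Sigma -> R) : Sigma -> R :=
  fun x => exp (- beta * H (scons false x)) * f (scons false x)
         + exp (- beta * H (scons true x)) * f (scons true x).

Definition is_eigenfunction (H : Sigma -> R) (beta lam : R) (Phi : Sigma -> R) : Prop :=
  continuous_Sigma Phi /\
  (forall x, 0 < Phi x) /\
  (forall x, Phi x <= 1) /\ (exists x, Phi x = 1) /\
  (forall x, transfer H beta Phi x = lam * Phi x).

(* Borel probability measures on the compact metric space Sigma, represented
   (Riesz) by their integration functionals on continuous functions:
   positive, linear, normalized. *)
Definition is_prob_functional (nu : (Sigma -> R) -> R) : Prop :=
  (forall f g, continuous_Sigma f -> continuous_Sigma g ->
     nu (fun x => f x + g x) = nu f + nu g) /\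
  (forall (c : R) f, continuous_Sigma f -> nu (fun x => c * f x) = c * nu f) /\
  (forall f, continuous_Sigma f -> (forall x, 0 <= f x) -> 0 <= nu f) /\
  nu (fun _ => 1) = 1.

Definition is_eigenmeasure (H : Sigma -> R) (beta lam : R) (nu : (Sigma -> R) -> R) : Prop :=
  is_prob_functional nu /\
  forall f, continuous_Sigma f -> nu (transfer H beta f) = lam * nu f.

Definition gibbs (Phi : Sigma -> R) (nu : (Sigma -> R) -> R) : (Sigma -> R) -> R :=
  fun f => nu (fun x => Phi x * f x) / nu Phi.

Definition weak_cv_dirac (mu : nat -> (Sigma -> R) -> R) (z : Sigma) : Prop :=
  forall f, continuous_Sigma f -> Un_cv (fun l => mu l f) (f z).

(* p_{k-1} with the convention p_{-1} = 0 *)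
Definition prev (p : nat -> nat) (k : nat) : nat :=
  match k with O => O | S k' => p k' end.

(* Main.v *)
Require Import Defs.
From Stdlib Require Import Reals Lra Lia Arith.
From Stdlib Require Import Classical ClassicalEpsilon FunctionalExtensionality Bool.
Open Scope R_scope.

Open Scope R_scope.

Definition agree (N : nat) (x y : Sigma) : Prop := forall i, (i < N)%nat -> x i = y i.
Definition shift (x : Sigma) : Sigma := fun i => x (S i).

Lemma agree_sym N x y : agree N x y -> agree N y x.
Proof. intros H i Hi; symmetry; auto. Qed.
Lemma agree_trans N x y z : agree N x y -> agree N y z -> agree N x z.
Proof. intros H1 H2 i Hi; rewrite H1 by auto; auto. Qed.
Lemma agree_le N M x y : (M <= N)%nat -> agree N x y -> agree M x y.
Proof. intros Hle H i Hi; apply H; lia. Qed.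
Lemma agree_scons N b x y : agree N x y -> agree (S N) (scons b x) (scons b y).
Proof. intros H [|i] Hi; simpl; auto. apply H; lia. Qed.
Lemma agree_shift N x y : agree (S N) x y -> agree N (shift x) (shift y).
Proof. intros H i Hi; unfold shift; apply H; lia. Qed.

Lemma scons_shift (x : Sigma) : scons (x O) (shift x) = x.
Proof. apply functional_extensionality; intros [|i]; reflexivity. Qed.

Lemma cont_def f : continuous_Sigma f <-> forall x eps, 0 < eps -> exists N, forall y, agree N y x -> Rabs (f y - f x) < eps.
Proof. unfold continuous_Sigma, agree; tauto. Qed.

Lemma cont_dep (N : nat) (f : Sigma -> R) : (forall x y, agree N x y -> f x = f y) -> continuous_Sigma f.
Proof.
  intros H x eps Heps. exists N. intros y Hy. rewrite (H y x Hy).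
  unfold Rminus; rewrite Rplus_opp_r, Rabs_R0; auto.
Qed.

Lemma cont_const (c : R) : continuous_Sigma (fun _ => c).
Proof. apply (cont_dep 0). auto. Qed.

Lemma cont_plus f g : continuous_Sigma f -> continuous_Sigma g -> continuous_Sigma (fun x => f x + g x).
Proof.
  intros Hf Hg x eps Heps.
  destruct (Hf x (eps/2)) as [N1 H1]; [lra|].
  destruct (Hg x (eps/2)) as [N2 H2]; [lra|].
  exists (N1 + N2)%nat. intros y Hy.
  assert (A1 := H1 y (fun i Hi => Hy i ltac:(lia))).
  assert (A2 := H2 y (fun i Hi => Hy i ltac:(lia))).
  replace (f y + g y - (f x + g x)) with ((f y - f x) + (g y - g x)) by ring.
  eapply Rle_lt_trans; [apply Rabs_triang|]. lra.
Qed.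

Lemma cont_mult f g : continuous_Sigma f -> continuous_Sigma g -> continuous_Sigma (fun x => f x * g x).
Proof.
  intros Hf Hg x eps Heps.
  set (a := Rabs (f x)). set (b := Rabs (g x)).
  assert (Ha : 0 <= a) by apply Rabs_pos. assert (Hb : 0 <= b) by apply Rabs_pos.
  set (d := Rmin 1 ((eps/2) / (a + b + 1))).
  assert (Hd0 : 0 < d). { unfold d; apply Rmin_pos; [lra|]. apply Rdiv_lt_0_compat; lra. }
  assert (Hd1 : d <= 1) by apply Rmin_l.
  assert (Hd2 : d * (a + b + 1) <= eps/2).
  { assert (d <= (eps/2) / (a+b+1)) by apply Rmin_r.
    apply Rmult_le_compat_r with (r := a+b+1) in H; [|lra].
    unfold Rdiv in H; rewrite Rmult_assoc, Rinv_l in H; lra. }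
  destruct (Hf x d Hd0) as [N1 H1]. destruct (Hg x d Hd0) as [N2 H2].
  exists (N1 + N2)%nat. intros y Hy.
  assert (A1 := H1 y (fun i Hi => Hy i ltac:(lia))).
  assert (A2 := H2 y (fun i Hi => Hy i ltac:(lia))).
  replace (f y * g y - f x * g x) with ((f y - f x) * (g y - g x) + (f y - f x) * g x + f x * (g y - g x)) by ring.
  eapply Rle_lt_trans; [apply Rabs_triang|].
  eapply Rle_lt_trans; [apply Rplus_le_compat_r; apply Rabs_triang|].
  rewrite !Rabs_mult. fold a b.
  assert (Rabs (f y - f x) * Rabs (g y - g x) <= d * d).
  { apply Rmult_le_compat; try apply Rabs_pos; lra. }
  assert (Rabs (f y - f x) * b <= d * b) by (apply Rmult_le_compat_r; lra).
  assert (a * Rabs (g y - g x) <= a * d) by (apply Rmult_le_compat_l; lra).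
  assert (d * d <= d * 1) by (apply Rmult_le_compat_l; lra).
  nra.
Qed.

Lemma cont_scal (c : R) f : continuous_Sigma f -> continuous_Sigma (fun x => c * f x).
Proof. intros; apply (cont_mult (fun _ => c) f); auto using cont_const. Qed.

Lemma cont_minus f g : continuous_Sigma f -> continuous_Sigma g -> continuous_Sigma (fun x => f x - g x).
Proof.
  intros Hf Hg. assert (E : (fun x => f x - g x) = (fun x => f x + (-1) * g x)).
  { apply functional_extensionality; intros; ring. }
  rewrite E. apply cont_plus; auto. apply cont_scal; auto.
Qed.

Lemma cont_scons (b : bool) f : continuous_Sigma f -> continuous_Sigma (fun x => f (scons b x)).
Proof.
  intros Hf x eps Heps. destruct (Hf (scons b x) eps Heps) as [N HN].
  exists N. intros y Hy. apply HN. intros [|i] Hi; simpl; auto. apply Hy; lia.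
Qed.

Lemma cont_shift f : continuous_Sigma f -> continuous_Sigma (fun x => f (shift x)).
Proof.
  intros Hf x eps Heps. destruct (Hf (shift x) eps Heps) as [N HN].
  exists (S N). intros y Hy. apply HN. intros i Hi; unfold shift; apply Hy; lia.
Qed.

Lemma exp_le_1 x : x <= 0 -> exp x <= 1.
Proof. intros H. rewrite <- exp_0. destruct (Req_dec x 0); [subst; lra| left; apply exp_increasing; lra]. Qed.

Lemma exp_lip a b : a <= 0 -> b <= 0 -> Rabs (exp a - exp b) <= Rabs (a - b).
Proof.
  assert (K : forall a b, a <= b -> b <= 0 -> exp b - exp a <= b - a).
  { intros a0 b0 H1 H2. assert (exp a0 = exp b0 * exp (a0 - b0)) by (rewrite <- exp_plus; f_equal; ring).
    rewrite H. assert (1 + (a0 - b0) <= exp (a0 - b0)) by apply exp_ineq1_le.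
    assert (exp b0 <= 1) by (apply exp_le_1; lra).
    assert (0 < exp b0) by apply exp_pos.
    assert (exp (a0 - b0) <= 1) by (apply exp_le_1; lra).
    nra. }
  intros Ha Hb. destruct (Rle_dec a b).
  - assert (exp a <= exp b) by (destruct (Req_dec a b); [subst; lra|left; apply exp_increasing; lra]).
    rewrite Rabs_left1, Rabs_left1 by lra. specialize (K a b r Hb). lra.
  - assert (exp b <= exp a) by (left; apply exp_increasing; lra).
    rewrite Rabs_right, Rabs_right by lra. specialize (K b a ltac:(lra) Ha). lra.
Qed.

Lemma cont_expneg (beta : R) f : 0 <= beta -> (forall x, 0 <= f x) -> continuous_Sigma f ->
  continuous_Sigma (fun x => exp (- beta * f x)).
Proof.
  intros Hb Hpos Hf x eps Heps.
  destruct (Hf x (eps / (beta + 1))) as [N HN]. { apply Rdiv_lt_0_compat; lra. }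
  exists N. intros y Hy. specialize (HN y Hy).
  eapply Rle_lt_trans. apply exp_lip; [generalize (Hpos y); nra | generalize (Hpos x); nra].
  replace (- beta * f y - - beta * f x) with (beta * (f x - f y)) by ring.
  rewrite Rabs_mult, Rabs_right by lra. rewrite <- Rabs_Ropp, Ropp_minus_distr.
  assert (beta * Rabs (f y - f x) <= beta * (eps/(beta+1))) by (apply Rmult_le_compat_l; lra).
  assert (beta * (eps / (beta + 1)) < eps).
  { unfold Rdiv. replace (beta * (eps * / (beta + 1))) with (eps * (beta / (beta+1))) by (unfold Rdiv; ring).
    assert (beta / (beta+1) < 1). { apply (Rmult_lt_reg_r (beta+1)); [lra|]. unfold Rdiv; rewrite Rmult_assoc, Rinv_l; lra. }
    nra. }
  lra.
Qed.

Definition upd (z : Sigma) (n : nat) (b : bool) : Sigma := fun i => if Nat.eqb i n then b else z i.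

Section Unif.
Variable f : Sigma -> R.
Variable eps : R.
Definition badp (n : nat) (z : Sigma) : Prop :=
  forall N, exists x y, agree n x z /\ agree n y z /\ agree N x y /\ eps <= Rabs (f x - f y).

Lemma badp_step n z : badp n z -> badp (S n) (upd z n false) \/ badp (S n) (upd z n true).
Proof.
  intros Hb. apply NNPP. intros Hn. apply not_or_and in Hn. destruct Hn as [H0 H1].
  apply not_all_ex_not in H0. apply not_all_ex_not in H1.
  destruct H0 as [N0 H0]. destruct H1 as [N1 H1].
  destruct (Hb (N0 + N1 + S n)%nat) as [x [y [Hx [Hy [Hxy He]]]]].
  assert (Exy : x n = y n) by (apply Hxy; lia).
  assert (G : forall b, x n = b -> agree (S n) x (upd z n b) /\ agree (S n) y (upd z n b)).
  { intros b Hb'. split; intros i Hi; unfold upd; destruct (Nat.eqb_spec i n).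
    - subst; auto. - apply Hx; lia. - subst; congruence. - apply Hy; lia. }
  destruct (x n) eqn:E.
  - apply H1. exists x, y. destruct (G true eq_refl). repeat split; auto.
    intros i Hi; apply Hxy; lia.
  - apply H0. exists x, y. destruct (G false eq_refl). repeat split; auto.
    intros i Hi; apply Hxy; lia.
Qed.

Definition choose_next (n : nat) (z : Sigma) : Sigma :=
  if excluded_middle_informative (badp (S n) (upd z n false)) then upd z n false else upd z n true.

Fixpoint zseq (n : nat) : Sigma :=
  match n with O => fun _ => false | S m => choose_next m (zseq m) end.

Lemma zseq_bad n : badp 0 (zseq 0) -> badp n (zseq n).
Proof.
  intros H0. induction n; auto. simpl. unfold choose_next.
  destruct (excluded_middle_informative _); auto.
  destruct (badp_step n (zseq n) IHn); tauto.
Qed.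

Lemma zseq_stable n m i : (i < n)%nat -> zseq (n + m) i = zseq n i.
Proof.
  intros Hi. induction m. rewrite Nat.add_0_r; auto.
  rewrite Nat.add_succ_r. simpl. unfold choose_next.
  destruct (excluded_middle_informative _); unfold upd; destruct (Nat.eqb_spec i (n+m)); try lia; auto.
Qed.

Definition zlim : Sigma := fun i => zseq (S i) i.

Lemma zlim_agree n : agree n zlim (zseq n).
Proof.
  intros i Hi. unfold zlim. replace n with (S i + (n - S i))%nat by lia.
  rewrite zseq_stable; auto.
Qed.
End Unif.

Lemma unif_cont f : continuous_Sigma f -> forall eps, 0 < eps ->
  exists N, forall x y, agree N x y -> Rabs (f x - f y) < eps.
Proof.
  intros Hf eps Heps. apply NNPP. intros Hn.
  assert (B0 : badp f eps 0 (zseq f eps 0)).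
  { intros N. apply NNPP. intros HN. apply Hn. exists N. intros x y Hxy.
    apply Rnot_le_lt. intros Hle. apply HN. exists x, y. repeat split; auto; intros i Hi; lia. }
  destruct (Hf (zlim f eps) (eps/2)) as [N HN]; [lra|].
  destruct (zseq_bad f eps N B0 N) as [x [y [Hx [Hy [_ He]]]]].
  assert (A1 := HN x (agree_trans _ _ _ _ Hx (agree_sym _ _ _ (zlim_agree f eps N)))).
  assert (A2 := HN y (agree_trans _ _ _ _ Hy (agree_sym _ _ _ (zlim_agree f eps N)))).
  replace (f x - f y) with ((f x - f (zlim f eps)) - (f y - f (zlim f eps))) in He by ring.
  assert (Rabs ((f x - f (zlim f eps)) - (f y - f (zlim f eps))) <= Rabs (f x - f (zlim f eps)) + Rabs (f y - f (zlim f eps))).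
  { unfold Rminus at 1. eapply Rle_trans; [apply Rabs_triang|]. rewrite Rabs_Ropp; lra. }
  lra.
Qed.

Lemma dep_bounded N : forall g : Sigma -> R, (forall x y, agree N x y -> g x = g y) ->
  exists M, forall x, Rabs (g x) <= M.
Proof.
  induction N; intros g Hg.
  - exists (Rabs (g (fun _ => false))). intros x. rewrite (Hg x (fun _ => false)); [lra|]. intros i Hi; lia.
  - destruct (IHN (fun x => g (scons false x))) as [M0 H0].
    { intros x y Hxy. apply Hg. apply agree_scons; auto. }
    destruct (IHN (fun x => g (scons true x))) as [M1 H1].
    { intros x y Hxy. apply Hg. apply agree_scons; auto. }
    exists (Rmax M0 M1). intros x. rewrite <- (scons_shift x).
    destruct (x O); [eapply Rle_trans; [apply H1|apply Rmax_r] | eapply Rle_trans; [apply H0|apply Rmax_l]].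
Qed.

Definition trunc (N : nat) (x : Sigma) : Sigma := fun i => if Nat.ltb i N then x i else false.

Lemma cont_bounded f : continuous_Sigma f -> exists M, forall x, Rabs (f x) <= M.
Proof.
  intros Hf. destruct (unif_cont f Hf 1 ltac:(lra)) as [N HN].
  destruct (dep_bounded N (fun x => f (trunc N x))) as [M HM].
  { intros x y Hxy. f_equal. apply functional_extensionality. intros i. unfold trunc.
    destruct (Nat.ltb_spec i N); auto. }
  exists (M + 1). intros x.
  assert (Rabs (f x - f (trunc N x)) < 1).
  { apply HN. intros i Hi. unfold trunc. destruct (Nat.ltb_spec i N); auto; lia. }
  specialize (HM x). simpl in HM.
  assert (Rabs (f x) <= Rabs (f x - f (trunc N x)) + Rabs (f (trunc N x))).
  { replace (f x) with ((f x - f (trunc N x)) + f (trunc N x)) at 1 by ring. apply Rabs_triang. }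
  lra.
Qed.

Open Scope bool_scope.
Open Scope R_scope.

Fixpoint prep (e : bool) (n : nat) (z : Sigma) : Sigma :=
  match n with O => z | S m => scons e (prep e m z) end.
Fixpoint runb (c : bool) (n : nat) (x : Sigma) : bool :=
  match n with O => true | S m => Bool.eqb (x O) c && runb c m (shift x) end.
Definition ind (b : bool) : R := if b then 1 else 0.
Definition cpre (c : bool) (n : nat) (x : Sigma) : R := ind (runb c n x).
Definition crun (c : bool) (n : nat) (x : Sigma) : R := ind (runb c n x && Bool.eqb (x n) (negb c)).
Definition shiftn (k : nat) (x : Sigma) : Sigma := fun i => x (k + i)%nat.

Lemma runb_iff c n x : runb c n x = true <-> forall i, (i < n)%nat -> x i = c.
Proof.
  revert x; induction n; intros x; simpl.
  - split; auto; intros; lia.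
  - rewrite Bool.andb_true_iff, IHn, Bool.eqb_true_iff. split.
    + intros [H1 H2] [|i] Hi; auto. apply (H2 i); lia.
    + intros H; split. apply H; lia. intros i Hi; apply (H (S i)); lia.
Qed.

Lemma runb_agree c n x y : agree n x y -> runb c n x = runb c n y.
Proof.
  intros H. destruct (runb c n x) eqn:E1, (runb c n y) eqn:E2; auto.
  - rewrite runb_iff in E1. assert (runb c n y = true) by (apply runb_iff; intros i Hi; rewrite <- (H i Hi); auto). congruence.
  - rewrite runb_iff in E2. assert (runb c n x = true) by (apply runb_iff; intros i Hi; rewrite (H i Hi); auto). congruence.
Qed.

Lemma runb_S_end c n x : runb c (S n) x = runb c n x && Bool.eqb (x n) c.
Proof.
  destruct (runb c (S n) x) eqn:E.
  - rewrite runb_iff in E. symmetry. apply Bool.andb_true_iff. split.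
    apply runb_iff; intros; apply E; lia. apply Bool.eqb_true_iff; apply E; lia.
  - symmetry. apply Bool.not_true_iff_false. intros H. apply Bool.andb_true_iff in H. destruct H as [H1 H2].
    rewrite runb_iff in H1. apply eqb_prop in H2.
    assert (runb c (S n) x = true). { apply runb_iff. intros i Hi. destruct (Nat.eq_dec i n) as [->|Hne]; [exact H2|]. apply H1; lia. }
    congruence.
Qed.

Lemma cpre_split c n x : cpre c n x = crun c n x + cpre c (S n) x.
Proof.
  unfold cpre, crun. rewrite runb_S_end. destruct (runb c n x); simpl; [|unfold ind; lra].
  destruct c, (x n); simpl; unfold ind; lra.
Qed.

Lemma cont_cpre c n : continuous_Sigma (cpre c n).
Proof. apply (cont_dep n). intros x y H. unfold cpre. rewrite (runb_agree c n x y H); auto. Qed.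

Lemma cont_crun c n : continuous_Sigma (crun c n).
Proof.
  apply (cont_dep (S n)). intros x y H. unfold crun.
  rewrite (runb_agree c n x y (agree_le (S n) n x y ltac:(lia) H)). rewrite (H n) by lia. auto.
Qed.

Lemma ind_01 b : 0 <= ind b <= 1.
Proof. destruct b; unfold ind; lra. Qed.
Lemma cpre_01 c n x : 0 <= cpre c n x <= 1. Proof. apply ind_01. Qed.
Lemma crun_01 c n x : 0 <= crun c n x <= 1. Proof. apply ind_01. Qed.

Lemma pre_lt e n z i : (i < n)%nat -> prep e n z i = e.
Proof. revert i; induction n; intros [|i] Hi; simpl; try lia; auto. apply IHn; lia. Qed.
Lemma pre_ge e n z i : prep e n z (n + i)%nat = z i.
Proof. induction n; simpl; auto. Qed.
Lemma pre_S e n z : prep e (S n) z = prep e n (scons e z).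
Proof.
  apply functional_extensionality. intros i.
  destruct (Nat.lt_ge_cases i (S n)).
  - rewrite pre_lt by lia. destruct (Nat.lt_ge_cases i n). rewrite pre_lt; auto.
    replace i with (n + 0)%nat by lia. rewrite pre_ge. auto.
  - replace i with (S n + (i - S n))%nat by lia. rewrite pre_ge.
    replace (S n + (i - S n))%nat with (n + S (i - S n))%nat by lia. rewrite pre_ge. auto.
Qed.
Lemma pre_add e n m z : prep e (n + m) z = prep e n (prep e m z).
Proof. induction n; simpl; auto. rewrite IHn; auto. Qed.

Lemma agree_pre e n N y y' : agree N y y' -> agree (n + N) (prep e n y) (prep e n y').
Proof.
  intros H i Hi. destruct (Nat.lt_ge_cases i n).
  rewrite !pre_lt; auto. replace i with (n + (i - n))%nat by lia. rewrite !pre_ge. apply H; lia.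
Qed.

Lemma crun_repr c n x : crun c n x = 1 -> x = prep c n (scons (negb c) (shiftn (S n) x)).
Proof.
  unfold crun, ind. destruct (runb c n x && Bool.eqb (x n) (negb c)) eqn:E; [|lra]. intros _.
  apply Bool.andb_true_iff in E. destruct E as [E1 E2]. rewrite runb_iff in E1. apply eqb_prop in E2.
  apply functional_extensionality. intros i. destruct (Nat.lt_ge_cases i n).
  - rewrite pre_lt; auto.
  - replace i with (n + (i - n))%nat by lia. rewrite pre_ge. destruct (i - n)%nat eqn:E; simpl.
    + replace (n + 0)%nat with n by lia. auto.
    + unfold shiftn. f_equal. lia.
Qed.

Lemma crun_pre c n y : crun c n (prep c n (scons (negb c) y)) = 1.
Proof.
  unfold crun, ind. replace (runb c n _ && _) with true; auto. symmetry. apply Bool.andb_true_iff. split.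
  apply runb_iff; intros; apply pre_lt; auto.
  replace n with (n + 0)%nat at 2 by lia. rewrite pre_ge. simpl. apply Bool.eqb_reflx.
Qed.

Lemma cpre_pre c n m y : (m <= n)%nat -> cpre c m (prep c n y) = 1.
Proof. intros H. unfold cpre, ind. replace (runb c m _) with true; auto. symmetry. apply runb_iff; intros; apply pre_lt; lia. Qed.

Lemma cpre_scons_neq c n b x : b <> c -> cpre c (S n) (scons b x) = 0.
Proof. intros H. unfold cpre, ind. simpl. destruct b, c; simpl; try congruence; auto. Qed.
Lemma crun_scons_neq c n b x : b <> c -> crun c (S n) (scons b x) = 0.
Proof. intros H. unfold crun, ind. simpl. destruct b, c; simpl; try congruence; auto. Qed.
Lemma cpre_scons_eq c n x : cpre c (S n) (scons c x) = cpre c n x.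
Proof. unfold cpre. simpl. rewrite Bool.eqb_reflx. simpl. auto. Qed.
Lemma crun_scons_eq c n x : crun c (S n) (scons c x) = crun c n x.
Proof. unfold crun. simpl. rewrite Bool.eqb_reflx. simpl. auto. Qed.

Definition Hc (H0 H1 : nat -> R) (c : bool) : nat -> R := if c then H1 else H0.

Section RDW.
Variables (H : Sigma -> R) (H0 H1 : nat -> R).
Hypothesis RDW : reduced_double_well H H0 H1.

Lemma H_cont : continuous_Sigma H. Proof. apply RDW. Qed.
Lemma H_nonneg x : 0 <= H x. Proof. apply RDW. Qed.
Lemma H_same x : x O = x 1%nat -> H x = 0. Proof. apply RDW. Qed.

Lemma H_run c n y : (1 <= n)%nat -> H (scons c (prep (negb c) n (scons c y))) = Hc H0 H1 c n /\ 0 < Hc H0 H1 c n.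
Proof.
  intros Hn. destruct RDW as [_ [_ [_ [_ [R0 [R1 _]]]]]].
  assert (C : in_cyl_abna c n (scons c (prep (negb c) n (scons c y)))).
  { split; [reflexivity|split].
    - intros i Hi. destruct i; [lia|]. simpl. apply pre_lt; lia.
    - simpl. replace n with (n + 0)%nat at 2 by lia. rewrite pre_ge. reflexivity. }
  destruct c; simpl; [apply R1|apply R0]; auto.
Qed.

Lemma Hc_pos c n : (1 <= n)%nat -> 0 < Hc H0 H1 c n.
Proof. intros Hn. apply (H_run c n (fun _ => false) Hn). Qed.
End RDW.

Lemma transfer_e H beta f x e : transfer H beta f x =
  exp (- beta * H (scons e x)) * f (scons e x) + exp (- beta * H (scons (negb e) x)) * f (scons (negb e) x).
Proof. unfold transfer. destruct e; simpl; ring. Qed.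

Open Scope R_scope.

Fixpoint fs (f : nat -> R) (n : nat) : R := match n with O => 0 | S m => fs f m + f m end.

Lemma fs_le f g n : (forall i, (i < n)%nat -> f i <= g i) -> fs f n <= fs g n.
Proof. induction n; simpl; intros; [lra|]. assert (f n <= g n) by (apply H; lia). assert (fs f n <= fs g n) by (apply IHn; intros; apply H; lia). lra. Qed.
Lemma fs_nonneg f n : (forall i, 0 <= f i) -> 0 <= fs f n.
Proof. intros H; induction n; simpl; [lra|]. specialize (H n); lra. Qed.
Lemma fs_mono f n m : (forall i, 0 <= f i) -> (n <= m)%nat -> fs f n <= fs f m.
Proof. intros H Hnm. induction Hnm; [lra|]. simpl. specialize (H m); lra. Qed.
Lemma fs_scal c f n : fs (fun i => c * f i) n = c * fs f n.
Proof. induction n; simpl; [ring|]. rewrite IHn; ring. Qed.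
Lemma fs_ext f g n : (forall i, f i = g i) -> fs f n = fs g n.
Proof. intros H; induction n; simpl; auto. rewrite IHn, H; auto. Qed.
Lemma fs_bound f n c : (forall i, f i <= c) -> fs f n <= INR n * c.
Proof. intros H; induction n; simpl fs; [simpl; lra|]. rewrite S_INR. specialize (H n). lra. Qed.

Lemma pow_le_one x n : 0 <= x <= 1 -> x ^ n <= 1.
Proof. intros H. rewrite <- (pow1 n). apply pow_incr; lra. Qed.
Lemma pow_decr x n m : 0 <= x <= 1 -> (n <= m)%nat -> x ^ m <= x ^ n.
Proof.
  intros Hx Hnm. replace m with (n + (m - n))%nat by lia. rewrite pow_add.
  generalize (pow_le_one x (m - n) Hx) (pow_le x n ltac:(lra)). nra.
Qed.

Lemma abs_le0 x : Rabs x <= 0 -> x = 0.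
Proof. intros H. destruct (Req_dec x 0); auto. exfalso. generalize (Rabs_no_R0 x H0) (Rabs_pos x). lra. Qed.

Lemma le_of_pow r x y C : 0 <= r < 1 -> 0 <= C -> (forall N, x <= y + C * r ^ N) -> x <= y.
Proof.
  intros Hr HC H. apply Rnot_lt_le. intros Hlt.
  destruct (Req_dec C 0). { specialize (H O). subst. lra. }
  destruct (pow_lt_1_zero r ltac:(rewrite Rabs_right; lra) ((x - y) / C)) as [N HN].
  { apply Rdiv_lt_0_compat; lra. }
  specialize (HN N (le_n N)). specialize (H N). rewrite Rabs_right in HN by (apply Rle_ge, pow_le; lra).
  assert (C * r ^ N < C * ((x - y) / C)) by (apply Rmult_lt_compat_l; lra).
  replace (C * ((x - y) / C)) with (x - y) in H1 by (field; auto). lra.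
Qed.

Lemma le_of_lim x y (g : nat -> R) : (forall N, x <= y + g N) -> (forall e, 0 < e -> exists N, g N < e) -> x <= y.
Proof.
  intros H Hg. apply Rnot_lt_le. intros Hlt. destruct (Hg (x - y)) as [N HN]; [lra|]. specialize (H N). lra.
Qed.

Lemma bernoulli2 h n : 0 <= h -> 1 + INR n * h + INR n * (INR n - 1) / 2 * h ^ 2 <= (1 + h) ^ n.
Proof.
  intros Hh. induction n. simpl. lra.
  rewrite S_INR. simpl pow. simpl pow in IHn.
  assert (0 <= INR n) by apply pos_INR.
  assert (0 <= INR n * (INR n - 1) \/ n = O).
  { destruct n. auto. left. rewrite S_INR. generalize (pos_INR n). nra. }
  assert (0 <= (1+h)^n) by (apply pow_le; lra).
  destruct H0 as [H0|H0]. 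
  - assert ((1 + INR n * h + INR n * (INR n - 1) / 2 * (h * (h * 1))) * (1 + h) <= (1+h)^n * (1+h)) by (apply Rmult_le_compat_r; lra).
    assert (0 <= INR n * (INR n - 1) * (h * (h * h))) by (apply Rmult_le_pos; auto; nra).
    nra.
  - subst. simpl. lra.
Qed.

Lemma npow_lim r : 0 <= r < 1 -> forall e, 0 < e -> exists N, (1 <= N)%nat /\ INR N * r ^ N < e.
Proof.
  intros Hr e He. destruct (Req_dec r 0) as [E|E].
  { exists 1%nat. split; [lia|]. subst. simpl. lra. }
  set (h := / r - 1). assert (Hh : 0 < h).
  { unfold h. assert (1 < / r). { rewrite <- Rinv_1. apply Rinv_lt_contravar; lra. } lra. }
  destruct (INR_unbounded (2 / (e * h ^ 2) + 1)) as [N HN0].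
  assert (HN : 2 / (e * h ^ 2) < INR N - 1) by lra.
  exists N. split. { destruct N; [|lia]. exfalso. change (INR 0) with 0 in HN0. assert (0 < 2 / (e * h^2)) by (apply Rdiv_lt_0_compat; [lra|]; apply Rmult_lt_0_compat; auto; apply pow_lt; auto). lra. }
  assert (Hr1 : r = / (1 + h)) by (unfold h; replace (1 + (/ r - 1)) with (/ r) by ring; rewrite Rinv_inv; auto).
  rewrite Hr1, pow_inv.
  assert (B := bernoulli2 h N (Rlt_le _ _ Hh)).
  assert (HNpos : 1 < INR N - 1 + 1) by (generalize (Rdiv_lt_0_compat 2 (e*h^2) ltac:(lra) ltac:(apply Rmult_lt_0_compat; auto; apply pow_lt; auto)); lra).
  assert (P : 0 < (1 + h) ^ N) by (apply pow_lt; lra).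
  apply (Rmult_lt_reg_r ((1+h)^N)); auto. rewrite Rmult_assoc, Rinv_l by lra. rewrite Rmult_1_r.
  assert (2 < e * h^2 * (INR N - 1)).
  { assert (0 < e * h ^ 2) by (apply Rmult_lt_0_compat; auto; apply pow_lt; auto).
    apply (Rmult_lt_compat_l (e * h^2)) in HN; auto.
    replace (e * h ^ 2 * (2 / (e * h ^ 2))) with 2 in HN by (field; lra). lra. }
  assert (0 <= INR N) by apply pos_INR.
  assert (INR N * 1 < e * (INR N * (INR N - 1) / 2 * h ^ 2)) by nra.
  assert (0 <= INR N * h) by nra.
  nra.
Qed.


Open Scope R_scope.

Section Sums.
Variable rr : R.
Hypothesis Hr : 0 < rr < 1.

Definition Gg (m : nat) : R := rr ^ m / (1 - rr).
Definition Gs (m : nat) : R := rr ^ m * (INR m * (1 - rr) + rr) / (1 - rr) ^ 2.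

Lemma Gg_diff m : Gg m - Gg (S m) = rr ^ m.
Proof. unfold Gg. simpl. field. lra. Qed.
Lemma Gs_diff m : Gs m - Gs (S m) = INR m * rr ^ m.
Proof. unfold Gs. rewrite S_INR. simpl. field. lra. Qed.
Lemma Gg_nonneg m : 0 <= Gg m.
Proof. unfold Gg. apply Rmult_le_pos. apply pow_le; lra. left; apply Rinv_0_lt_compat; lra. Qed.
Lemma Gs_nonneg m : 0 <= Gs m.
Proof.
  unfold Gs. apply Rmult_le_pos. apply Rmult_le_pos. apply pow_le; lra.
  generalize (pos_INR m); nra. left; apply Rinv_0_lt_compat. apply pow_lt; lra.
Qed.

Lemma rr_pow_le1 n : rr ^ n <= 1.
Proof. apply pow_le_one; lra. Qed.

Lemma GS1 (w : nat -> R) d P : (forall t, (1 <= t <= P)%nat -> w t <= d) -> (forall t, (1 <= t)%nat -> 0 <= w t <= 1) ->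
  forall N, fs (fun j => rr ^ (S j) * w (S j)) N <= d * INR (Nat.min N P) + (Gg (S P) - Gg (S (Nat.max N P))).
Proof.
  intros Hd Hw N. induction N.
  - simpl. replace (Nat.max 0 P) with P by lia. lra.
  - cbn [fs]. destruct (le_lt_dec (S N) P).
    + replace (Nat.min (S N) P) with (S (Nat.min N P)) by lia.
      replace (Nat.max (S N) P) with (Nat.max N P) by lia. rewrite S_INR.
      assert (rr ^ S N * w (S N) <= d).
      { generalize (Hd (S N) ltac:(lia)) (Hw (S N) ltac:(lia)) (rr_pow_le1 (S N)) (pow_le rr (S N) ltac:(lra)). nra. }
      lra.
    + replace (Nat.min (S N) P) with (Nat.min N P) by lia.
      replace (Nat.max (S N) P) with (S N) by lia. replace (Nat.max N P) with N in IHN by lia.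
      generalize (Gg_diff (S N)). generalize (Hw (S N) ltac:(lia)) (pow_le rr (S N) ltac:(lra)). intros. nra.
Qed.

Lemma GS2 (w : nat -> R) e P : 0 <= e -> (forall t, (P < t)%nat -> e <= w t) -> (forall t, 0 <= w t) ->
  forall N, e * (Gg (S P) - Gg (S (Nat.max N P))) <= fs (fun j => rr ^ (S j) * w (S j)) N.
Proof.
  intros He Hd Hw N. induction N.
  - simpl. replace (Nat.max 0 P) with P by lia. lra.
  - cbn [fs]. destruct (le_lt_dec (S N) P).
    + replace (Nat.max (S N) P) with (Nat.max N P) by lia.
      generalize (Hw (S N)) (pow_le rr (S N) ltac:(lra)). nra.
    + replace (Nat.max (S N) P) with (S N) by lia. replace (Nat.max N P) with N in IHN by lia.
      generalize (Gg_diff (S N)). generalize (Hd (S N) ltac:(lia)) (pow_le rr (S N) ltac:(lra)). intros. nra.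
Qed.

Lemma GS3 (w : nat -> R) d P : 0 <= d -> (forall t, (1 <= t <= P)%nat -> w t <= d) -> (forall t, (1 <= t)%nat -> 0 <= w t <= 1) ->
  forall N, fs (fun m => INR (S m) * rr ^ (S m) * w (S m)) N <= d * INR P * INR (Nat.min N P) + (Gs (S P) - Gs (S (Nat.max N P))).
Proof.
  intros Hd0 Hd Hw N. induction N.
  - simpl. replace (Nat.max 0 P) with P by lia. lra.
  - cbn [fs]. destruct (le_lt_dec (S N) P).
    + replace (Nat.min (S N) P) with (S (Nat.min N P)) by lia.
      replace (Nat.max (S N) P) with (Nat.max N P) by lia. rewrite (S_INR (Nat.min N P)).
      assert (INR (S N) * rr ^ S N * w (S N) <= d * INR P).
      { assert (INR (S N) <= INR P) by (apply le_INR; lia).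
        generalize (Hd (S N) ltac:(lia)) (Hw (S N) ltac:(lia)) (rr_pow_le1 (S N)) (pow_le rr (S N) ltac:(lra)) (pos_INR (S N)). intros.
        assert (rr ^ S N * w (S N) <= d) by nra.
        assert (0 <= rr ^ S N * w (S N)) by nra. nra. }
      lra.
    + replace (Nat.min (S N) P) with (Nat.min N P) by lia.
      replace (Nat.max (S N) P) with (S N) by lia. replace (Nat.max N P) with N in IHN by lia.
      generalize (Gs_diff (S N)). generalize (Hw (S N) ltac:(lia)) (pow_le rr (S N) ltac:(lra)) (pos_INR (S N)). intros.
      assert (0 <= INR (S N) * rr ^ S N) by nra. nra.
Qed.

Lemma GS4 (w : nat -> R) e P : 0 <= e -> (forall t, (P < t)%nat -> e <= w t) -> (forall t, 0 <= w t) ->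
  forall N, e * (Gs (S P) - Gs (S (Nat.max N P))) <= fs (fun m => INR (S m) * rr ^ (S m) * w (S m)) N.
Proof.
  intros He Hd Hw N. induction N.
  - simpl. replace (Nat.max 0 P) with P by lia. lra.
  - cbn [fs]. destruct (le_lt_dec (S N) P).
    + replace (Nat.max (S N) P) with (Nat.max N P) by lia.
      generalize (Hw (S N)) (pow_le rr (S N) ltac:(lra)) (pos_INR (S N)). intros.
      assert (0 <= INR (S N) * rr ^ S N) by nra. nra.
    + replace (Nat.max (S N) P) with (S N) by lia. replace (Nat.max N P) with N in IHN by lia.
      generalize (Gs_diff (S N)). generalize (Hd (S N) ltac:(lia)) (pow_le rr (S N) ltac:(lra)) (pos_INR (S N)). intros.
      assert (0 <= INR (S N) * rr ^ S N) by nra. nra.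
Qed.

Lemma Gs_decr m n : (m <= n)%nat -> Gs n <= Gs m.
Proof.
  intros H. induction H. lra. generalize (Gs_diff m0) (pos_INR m0) (pow_le rr m0 ltac:(lra)). nra.
Qed.

Lemma Gs_small e : 0 < e -> exists m, Gs m < e.
Proof.
  intros He. set (u := 1 - rr).
  destruct (npow_lim rr ltac:(lra) (e * u ^ 2 / 2)) as [m [Hm1 Hm]].
  { apply Rmult_lt_0_compat. apply Rmult_lt_0_compat; auto. apply pow_lt; unfold u; lra. lra. }
  exists m. unfold Gs. fold u.
  assert (rr ^ m <= INR m * rr ^ m).
  { rewrite <- (Rmult_1_l (rr ^ m)) at 1. apply Rmult_le_compat_r. apply pow_le; lra.
    replace 1 with (INR 1) by reflexivity. apply le_INR; auto. }
  assert (Hu : 0 < u ^ 2) by (apply pow_lt; unfold u; lra).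
  apply (Rmult_lt_reg_r (u ^ 2)); auto. unfold Rdiv. rewrite Rmult_assoc, Rinv_l by lra.
  assert (0 < u <= 1) by (unfold u; lra). assert (0 <= rr ^ m) by (apply pow_le; lra).
  assert (rr ^ m * (INR m * u + rr) <= 2 * (INR m * rr ^ m)).
  { assert (INR m * u <= INR m) by (generalize (pos_INR m); nra). nra. }
  replace (e * u ^ 2 / 2) with ((e * u^2) * / 2) in Hm by reflexivity. nra.
Qed.
End Sums.

Lemma exp_pow x n : exp x ^ n = exp (INR n * x).
Proof. induction n. simpl. rewrite Rmult_0_l, exp_0; auto. rewrite S_INR. simpl. rewrite IHn, <- exp_plus. f_equal; ring. Qed.

Lemma one_minus_ge_exp u : 0 <= u <= 1/2 -> exp (-2 * u) <= 1 - u.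
Proof.
  intros Hu. assert (1 + 2 * u <= exp (2 * u)) by apply exp_ineq1_le.
  assert (exp (-2 * u) * exp (2 * u) = 1) by (rewrite <- exp_plus; replace (-2*u + 2*u) with 0 by ring; apply exp_0).
  assert (0 < exp (-2 * u)) by apply exp_pos.
  assert ((1 - u) * (1 + 2 * u) >= 1) by nra. nra.
Qed.

Lemma pow_ge_exp u n : 0 <= u <= 1/2 -> exp (-2 * u * INR n) <= (1 - u) ^ n.
Proof.
  intros Hu. replace (-2 * u * INR n) with (INR n * (-2 * u)) by ring. rewrite <- exp_pow.
  apply pow_incr. split. left; apply exp_pos. apply one_minus_ge_exp; auto.
Qed.

Section Key.
Variables (P Q : nat) (d e rr A B W : R).
Hypothesis HPQ : (P < Q)%nat.
Hypothesis Hrr : 1/2 <= rr < 1.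
Hypothesis Hd : 0 < d <= 1.
Hypothesis He : 1/2 <= e <= 1.
Hypothesis HA : 0 < A. Hypothesis HB : 0 < B. Hypothesis HAB : A * B = 1.
Hypothesis HA1 : e * Gg rr (S P) <= A. Hypothesis HA2 : A <= d * INR P + Gg rr (S P).
Hypothesis HB1 : e * Gg rr (S Q) <= B. Hypothesis HB2 : B <= d * INR Q + Gg rr (S Q).
Hypothesis HW : 1 <= W.
Hypothesis HWQ : W ^ 2 * exp (4 * W) < INR (S Q) ^ 2 * e ^ 2.
Hypothesis Hsmall : d ^ 2 * INR Q ^ 2 + 2 * d * INR Q * INR (S Q) <= 1/2.

Let u := 1 - rr.
Let a := rr ^ (S P).
Let b := rr ^ (S Q).
Let p := INR (S P).
Let q := INR (S Q).

Lemma key_facts : 0 < u <= 1/2 /\ 0 < a <= rr /\ 0 < b <= rr /\ 1 <= p /\ p <= q /\ 2 <= q.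
Proof.
  unfold u, a, b, p, q. repeat split; try lra.
  apply pow_lt; lra. simpl. generalize (pow_le_one rr P ltac:(lra)); nra.
  apply pow_lt; lra. simpl. generalize (pow_le_one rr Q ltac:(lra)); nra.
  rewrite S_INR; generalize (pos_INR P); lra. apply le_INR; lia.
  replace 2 with (INR 2) by (simpl; ring). apply le_INR; lia.
Qed.

Lemma key_XY : e ^ 2 * (a * b) <= u ^ 2.
Proof.
  destruct key_facts as [[Hu0 Hu1] [[Ha0 Ha1] [[Hb0 Hb1] _]]].
  unfold Gg in *. fold u a b in HA1, HB1.
  assert (E1 : e * a / u * (e * b / u) <= A * B).
  { apply Rmult_le_compat; auto. unfold Rdiv; apply Rmult_le_pos; [nra|left; apply Rinv_0_lt_compat; lra].
    unfold Rdiv; apply Rmult_le_pos; [nra|left; apply Rinv_0_lt_compat; lra].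
    unfold Rdiv in *; lra. unfold Rdiv in *; lra. }
  rewrite HAB in E1. replace (e * a / u * (e * b / u)) with (e ^ 2 * (a * b) / u ^ 2) in E1 by (field; lra).
  apply (Rmult_le_reg_r (/ u ^ 2)). apply Rinv_0_lt_compat, pow_lt; lra.
  rewrite Rinv_r by (apply pow_nonzero; lra). exact E1.
Qed.

Lemma key_u : W <= q * u.
Proof.
  destruct key_facts as [[Hu0 Hu1] [[Ha0 Ha1] [[Hb0 Hb1] [Hp1 [Hpq Hq2]]]]].
  apply Rnot_lt_le. intros Hlt.
  assert (Eab : a * b = (1 - u) ^ (S P + S Q)) by (unfold a, b, u; replace (1 - (1 - rr)) with rr by ring; rewrite pow_add; auto).
  assert (G1 := pow_ge_exp u (S P + S Q) ltac:(lra)).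
  rewrite plus_INR in G1. fold p q in G1.
  assert (G2 : exp (-4 * W) < exp (-2 * u * (p + q))).
  { apply exp_increasing. nra. }
  assert (G3 := key_XY).
  assert (u < W / q) by (apply (Rmult_lt_reg_r q); [lra|]; unfold Rdiv; rewrite Rmult_assoc, Rinv_l; lra).
  assert (u ^ 2 < (W / q) ^ 2) by (simpl; rewrite !Rmult_1_r; apply Rmult_le_0_lt_compat; lra).
  assert (K1 : e ^ 2 * exp (-4 * W) < (W / q) ^ 2).
  { assert (0 < e ^ 2) by (apply pow_lt; lra). rewrite <- Eab in G1. nra. }
  assert (HWQ' : W ^ 2 * exp (4 * W) < q ^ 2 * e ^ 2) by exact HWQ.
  assert (K2 : exp (-4 * W) * exp (4 * W) = 1) by (rewrite <- exp_plus; replace (-4 * W + 4 * W) with 0 by ring; apply exp_0).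
  assert (K3 : (W / q) ^ 2 * q ^ 2 = W ^ 2) by (field; lra).
  assert (Pq : 0 < q ^ 2) by (apply pow_lt; lra).
  assert (K4 : e ^ 2 * exp (-4 * W) * q ^ 2 < W ^ 2) by (rewrite <- K3; apply Rmult_lt_compat_r; auto).
  assert (K5 : 0 < exp (4 * W)) by apply exp_pos.
  assert (K6 : e ^ 2 * exp (-4 * W) * q ^ 2 * exp (4 * W) < W ^ 2 * exp (4 * W)) by (apply Rmult_lt_compat_r; auto).
  replace (e ^ 2 * exp (-4 * W) * q ^ 2 * exp (4 * W)) with (q ^ 2 * e ^ 2 * (exp (-4 * W) * exp (4 * W))) in K6 by ring.
  rewrite K2 in K6. lra.
Qed.

Lemma key_Z : u ^ 2 <= 2 * (a * b).
Proof.
  destruct key_facts as [[Hu0 Hu1] [[Ha0 Ha1] [[Hb0 Hb1] [Hp1 [Hpq Hq2]]]]].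
  assert (Hqu := key_u). fold u q in Hqu.
  unfold Gg in *. fold u a b in HA1, HA2, HB1, HB2.
  set (x := a / u) in *. set (y := b / u) in *.
  assert (Hx : x <= q). { unfold x. apply (Rmult_le_reg_r u); auto. unfold Rdiv. rewrite Rmult_assoc, Rinv_l by lra. nra. }
  assert (Hy : y <= q). { unfold y. apply (Rmult_le_reg_r u); auto. unfold Rdiv. rewrite Rmult_assoc, Rinv_l by lra. nra. }
  assert (Hx0 : 0 <= x) by (unfold x; apply Rmult_le_pos; [lra|left; apply Rinv_0_lt_compat; lra]).
  assert (Hy0 : 0 <= y) by (unfold y; apply Rmult_le_pos; [lra|left; apply Rinv_0_lt_compat; lra]).
  assert (P1 : A * B <= (d * INR P + x) * (d * INR Q + y)) by (apply Rmult_le_compat; lra).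
  rewrite HAB in P1.
  assert (HPQr : INR P <= INR Q) by (apply le_INR; lia).
  assert (HP0 : 0 <= INR P) by apply pos_INR.
  assert (HQq : INR (S Q) = q) by reflexivity.
  rewrite HQq in Hsmall.
  assert (d * INR P * y <= d * INR Q * q) by (apply Rmult_le_compat; try nra).
  assert (d * INR Q * x <= d * INR Q * q) by (apply Rmult_le_compat_l; nra).
  assert (d * INR P * (d * INR Q) <= d ^ 2 * INR Q ^ 2).
  { simpl. rewrite !Rmult_1_r. assert (d * INR P <= d * INR Q) by (apply Rmult_le_compat_l; lra).
    assert (0 <= d * INR Q) by nra. nra. }
  assert (Hxy : 1/2 <= x * y) by nra.
  assert (E : x * y = a * b / u ^ 2) by (unfold x, y; field; lra).
  rewrite E in Hxy. assert (E3 : a * b / u ^ 2 * u ^ 2 = a * b) by (field; lra).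
  assert (0 < u ^ 2) by (apply pow_lt; lra). nra.
Qed.

Lemma key_bound : B ^ 2 * (d * INR P * INR P + Gs rr (S P)) / (e * Gs rr (S Q)) <=
  ((4 * d ^ 2 * INR Q ^ 2 + 2) * (d * INR P * INR P) + 8 * d ^ 2 * INR Q ^ 2 * (p * q + q ^ 2) + (2 / e ^ 2) * (p / q + 1 / W)) / e.
Proof.
  destruct key_facts as [[Hu0 Hu1] [[Ha0 Ha1] [[Hb0 Hb1] [Hp1 [Hpq Hq2]]]]].
  assert (Hqu := key_u). fold u q in Hqu.
  assert (HZ := key_Z). assert (HXY := key_XY).
  unfold Gg in HA1, HA2, HB1, HB2. unfold Gs. fold u a b p q in HA1, HA2, HB1, HB2 |- *.
  set (GP := a * (p * u + rr) / u ^ 2). set (GQ := b * (q * u + rr) / u ^ 2).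
  assert (Hu2 : 0 < u ^ 2) by (apply pow_lt; lra).
  assert (GQh : 1/2 <= GQ).
  { assert (E : GQ * u ^ 2 = b * (q * u + rr)) by (unfold GQ; field; lra).
    assert (b * rr <= b * (q * u + rr)) by (apply Rmult_le_compat_l; nra).
    assert (a * b <= rr * b) by (apply Rmult_le_compat_r; lra).
    apply (Rmult_le_reg_r (u ^ 2)); auto. nra. }
  assert (Hy2 : (b / u) ^ 2 <= GQ).
  { unfold GQ. replace ((b / u) ^ 2) with (b * b / u ^ 2) by (field; lra). unfold Rdiv.
    apply Rmult_le_compat_r. left; apply Rinv_0_lt_compat; auto. apply Rmult_le_compat_l; nra. }
  set (y := b / u) in *.
  assert (HQ0 : 0 <= INR Q) by apply pos_INR.
  assert (Bsq : B ^ 2 <= (4 * d ^ 2 * INR Q ^ 2 + 2) * GQ).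
  { assert (B ^ 2 <= (d * INR Q + y) ^ 2) by (simpl; apply Rmult_le_compat; nra).
    assert ((d * INR Q + y) ^ 2 <= 2 * (d ^ 2 * INR Q ^ 2) + 2 * y ^ 2) by (generalize (pow2_ge_0 (d * INR Q - y)); simpl; nra).
    assert (0 <= d ^ 2 * INR Q ^ 2) by (simpl; nra). nra. }
  assert (Hrho : (p * u + rr) <= (p / q + 1 / W) * (q * u + rr)).
  { assert (p / q * (q * u) = p * u) by (field; lra).
    assert (1 / W * (q * u) >= 1) by (unfold Rdiv; rewrite Rmult_1_l; apply Rle_ge; apply (Rmult_le_reg_l W); [lra|]; rewrite <- Rmult_assoc, Rinv_r by lra; lra).
    assert (0 <= (p / q + 1 / W) * rr).
    { apply Rmult_le_pos; [|lra]. apply Rplus_le_le_0_compat; unfold Rdiv; apply Rmult_le_pos; try lra; left; apply Rinv_0_lt_compat; lra. }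
    nra. }
  assert (T2a : y ^ 2 * GP <= (1 / e ^ 2) * (p / q + 1 / W) * GQ).
  { assert (E : y ^ 2 * GP = (a * b / u ^ 2) * ((p * u + rr) * (b / u ^ 2))) by (unfold y, GP; field; lra).
    assert (E2 : (1 / e ^ 2) * (p / q + 1 / W) * GQ = (1 / e ^ 2) * ((p / q + 1 / W) * (q * u + rr) * (b / u ^ 2))) by (unfold GQ; field; lra).
    rewrite E, E2.
    assert (Hab : a * b / u ^ 2 <= 1 / e ^ 2).
    { assert (0 < e ^ 2) by (apply pow_lt; lra).
      apply (Rmult_le_reg_r (u ^ 2 * e ^ 2)). nra.
      replace (a * b / u ^ 2 * (u ^ 2 * e ^ 2)) with (e ^ 2 * (a * b)) by (field; lra).
      replace (1 / e ^ 2 * (u ^ 2 * e ^ 2)) with (u ^ 2) by (field; lra). lra. }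
    assert (0 <= b / u ^ 2) by (unfold Rdiv; apply Rmult_le_pos; [lra|left; apply Rinv_0_lt_compat; auto]).
    apply Rmult_le_compat. apply Rmult_le_pos; [apply Rmult_le_pos; lra|left; apply Rinv_0_lt_compat; auto].
    apply Rmult_le_pos; [nra|auto]. auto. apply Rmult_le_compat_r; auto. }
  assert (T2b : GP <= 4 * (p * q + q ^ 2) * GQ).
  { unfold GP, GQ. unfold Rdiv.
    replace (4 * (p * q + q ^ 2) * (b * (q * u + rr) * / u ^ 2)) with (4 * (p * q + q ^ 2) * (b * (q * u + rr)) * / u ^ 2) by ring.
    apply Rmult_le_compat_r. left; apply Rinv_0_lt_compat; auto.
    assert (Hqu1 : 1 <= q * u) by lra.
    assert (a * a * (p * u + rr) <= (p * q + q ^ 2) * u ^ 2).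
    { assert (a * a <= 1) by nra. assert (p * u + rr <= p * u + 1) by lra.
      assert (0 <= p * u + rr) by nra.
      assert (0 <= p * u * (q * u - 1)) by (apply Rmult_le_pos; nra).
      assert (p * u <= p * q * u ^ 2) by (simpl; nra).
      assert (1 <= (q * u) * (q * u)) by nra.
      assert (1 <= q ^ 2 * u ^ 2) by (simpl; nra). nra. }
    assert (u ^ 2 <= 2 * (a * b)) by exact HZ.
    assert ((p * q + q ^ 2) * u ^ 2 <= (p * q + q ^ 2) * (2 * (a * b))) by (apply Rmult_le_compat_l; [nra|auto]).
    assert (b * rr <= b * (q * u + rr)) by (apply Rmult_le_compat_l; nra).
    assert (a * (a * (p * u + rr)) <= a * (4 * (p * q + q ^ 2) * (b * (q * u + rr)))).
    { assert (K0 : 0 <= p * q + q ^ 2) by nra.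
      assert (K1 : 0 <= a * (4 * (p * q + q ^ 2))) by nra.
      assert (K2 : b * (1/2) <= b * (q * u + rr)) by nra.
      assert (K3 : a * (4 * (p * q + q ^ 2)) * (b * (1/2)) <= a * (4 * (p * q + q ^ 2)) * (b * (q * u + rr))) by (apply Rmult_le_compat_l; auto).
      nra. }
    apply (Rmult_le_reg_l a); auto. }
  assert (HP0 : 0 <= INR P) by apply pos_INR.
  assert (Hnum : B ^ 2 * (d * INR P * INR P + GP) <=
    ((4 * d ^ 2 * INR Q ^ 2 + 2) * (d * INR P * INR P) + 8 * d ^ 2 * INR Q ^ 2 * (p * q + q ^ 2) + (2 / e ^ 2) * (p / q + 1 / W)) * GQ).
  { assert (0 <= d * INR P * INR P) by (apply Rmult_le_pos; [apply Rmult_le_pos|]; lra).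
    assert (0 <= GP) by (unfold GP; unfold Rdiv; apply Rmult_le_pos; [apply Rmult_le_pos; nra|left; apply Rinv_0_lt_compat; auto]).
    assert (T1 : B ^ 2 * (d * INR P * INR P) <= (4 * d ^ 2 * INR Q ^ 2 + 2) * GQ * (d * INR P * INR P)) by (apply Rmult_le_compat_r; auto).
    assert (B ^ 2 <= (d * INR Q + y) ^ 2) by (simpl; apply Rmult_le_compat; nra).
    assert (B ^ 2 * GP <= (2 * (d ^ 2 * INR Q ^ 2) + 2 * y ^ 2) * GP).
    { apply Rmult_le_compat_r; auto. assert ((d * INR Q + y) ^ 2 <= 2 * (d ^ 2 * INR Q ^ 2) + 2 * y ^ 2) by (generalize (pow2_ge_0 (d * INR Q - y)); simpl; nra). lra. }
    assert (0 <= d ^ 2 * INR Q ^ 2) by (simpl; nra).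
    assert (2 * (d ^ 2 * INR Q ^ 2) * GP <= 2 * (d ^ 2 * INR Q ^ 2) * (4 * (p * q + q ^ 2) * GQ)) by (apply Rmult_le_compat_l; lra).
    replace (2 / e ^ 2) with (2 * (1 / e ^ 2)) by (field; lra).
    nra. }
  assert (GQ0 : 0 < e * GQ) by nra.
  fold GP GQ.
  apply (Rmult_le_reg_r (e * GQ)); auto.
  replace (B ^ 2 * (d * INR P * INR P + GP) / (e * GQ) * (e * GQ)) with (B ^ 2 * (d * INR P * INR P + GP)) by (field; lra).
  match goal with |- _ <= ?X / e * (e * GQ) => replace (X / e * (e * GQ)) with (X * GQ) by (field; lra) end.
  exact Hnum.
Qed.
End Key.

Open Scope R_scope.

Section K.
Variables (H : Sigma -> R) (H0 H1 : nat -> R) (beta lam : R) (Phi : Sigma -> R) (nu : (Sigma -> R) -> R).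
Hypothesis RDW : reduced_double_well H H0 H1.
Hypothesis EF : is_eigenfunction H beta lam Phi.
Hypothesis EM : is_eigenmeasure H beta lam nu.
Hypothesis Hb : 0 <= beta.

Definition r := / lam.
Definition wt (c : bool) (n : nat) : R := exp (- beta * Hc H0 H1 c n).

Lemma nu_ext f g : (forall x, f x = g x) -> nu f = nu g.
Proof. intros E. f_equal. apply functional_extensionality; auto. Qed.
Lemma nu_plus f g : continuous_Sigma f -> continuous_Sigma g -> nu (fun x => f x + g x) = nu f + nu g.
Proof. apply EM. Qed.
Lemma nu_scal c f : continuous_Sigma f -> nu (fun x => c * f x) = c * nu f.
Proof. apply EM. Qed.
Lemma nu_pos f : continuous_Sigma f -> (forall x, 0 <= f x) -> 0 <= nu f.
Proof. apply EM. Qed.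
Lemma nu_one : nu (fun _ => 1) = 1.
Proof. apply EM. Qed.
Lemma nu_minus f g : continuous_Sigma f -> continuous_Sigma g -> nu (fun x => f x - g x) = nu f - nu g.
Proof.
  intros Hf Hg. rewrite (nu_ext _ (fun x => f x + (-1) * g x)) by (intros; ring).
  rewrite nu_plus, nu_scal; auto; [ring|]. apply cont_scal; auto.
Qed.
Lemma nu_mono f g : continuous_Sigma f -> continuous_Sigma g -> (forall x, f x <= g x) -> nu f <= nu g.
Proof.
  intros Hf Hg Hle. assert (0 <= nu (fun x => g x - f x)) by (apply nu_pos; [apply cont_minus; auto|intros x; specialize (Hle x); lra]).
  rewrite nu_minus in H2; auto. lra.
Qed.
Lemma nu_const c : nu (fun _ => c) = c.
Proof. rewrite (nu_ext _ (fun _ => c * 1)) by (intros; ring). rewrite nu_scal by apply cont_const. rewrite nu_one; ring. Qed.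

Lemma cont_wH e : continuous_Sigma (fun x => exp (- beta * H (scons e x))).
Proof. apply (cont_expneg beta (fun x => H (scons e x))); auto. intros; apply (H_nonneg _ _ _ RDW). apply cont_scons, (H_cont _ _ _ RDW). Qed.

Lemma cont_transfer f : continuous_Sigma f -> continuous_Sigma (transfer H beta f).
Proof.
  intros Hf. unfold transfer. apply cont_plus; apply cont_mult; try apply cont_wH; apply cont_scons; auto.
Qed.

Lemma Phi_cont : continuous_Sigma Phi. Proof. apply EF. Qed.
Lemma Phi_pos x : 0 < Phi x. Proof. apply EF. Qed.
Lemma Phi_le1 x : Phi x <= 1. Proof. apply EF. Qed.
Lemma Phi_eig x : transfer H beta Phi x = lam * Phi x. Proof. apply EF. Qed.

Lemma wH_pos e x : 0 < exp (- beta * H (scons e x)). Proof. apply exp_pos. Qed.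
Lemma wH_le1 e x : exp (- beta * H (scons e x)) <= 1.
Proof. apply exp_le_1. generalize (H_nonneg _ _ _ RDW (scons e x)). nra. Qed.

Lemma lam_gt1 : 1 < lam.
Proof.
  set (z := fun _ : nat => false).
  assert (Ez : scons false z = z) by (apply functional_extensionality; intros [|i]; reflexivity).
  generalize (Phi_eig z). unfold transfer. rewrite Ez.
  rewrite (H_same _ _ _ RDW z) by reflexivity.
  replace (- beta * 0) with 0 by ring. rewrite exp_0.
  generalize (wH_pos true z) (Phi_pos (scons true z)) (Phi_pos z). intros. nra.
Qed.

Lemma nu_transfer f : continuous_Sigma f -> nu f = r * nu (transfer H beta f).
Proof. intros Hf. destruct EM as [_ E]. rewrite E by auto. unfold r. generalize lam_gt1; intros. field. lra. Qed.

Lemma lam_le2 : lam <= 2.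
Proof.
  destruct EM as [_ E]. assert (E1 := E (fun _ => 1) (cont_const 1)). rewrite nu_one in E1.
  assert (nu (transfer H beta (fun _ => 1)) <= nu (fun _ => 2)).
  { apply nu_mono. apply cont_transfer, cont_const. apply cont_const.
    intros x. unfold transfer. generalize (wH_le1 false x) (wH_le1 true x). lra. }
  rewrite nu_const in H2. lra.
Qed.

Lemma r_pos : 0 < r. Proof. unfold r. apply Rinv_0_lt_compat. generalize lam_gt1; lra. Qed.
Lemma r_lt1 : r < 1. Proof. unfold r. rewrite <- Rinv_1. apply Rinv_lt_contravar. generalize lam_gt1; lra. generalize lam_gt1; lra. Qed.
Lemma r_ge_half : / 2 <= r. Proof. unfold r. apply Rinv_le_contravar. generalize lam_gt1; lra. apply lam_le2. Qed.

Lemma Phi_fix x : Phi x = r * transfer H beta Phi x.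
Proof. rewrite Phi_eig. unfold r. generalize lam_gt1; intros. field. lra. Qed.

Lemma pre_0 c n z : (1 <= n)%nat -> prep c n z O = c.
Proof. intros; apply pre_lt; lia. Qed.

Lemma H_runpt c n y : (1 <= n)%nat -> H (scons (negb c) (prep c n (scons (negb c) y))) = Hc H0 H1 (negb c) n.
Proof. intros Hn. pose proof (H_run _ _ _ RDW (negb c) n y Hn) as [E _]. rewrite negb_involutive in E. exact E. Qed.

Lemma wt_pos c n : 0 < wt c n. Proof. apply exp_pos. Qed.
Lemma wt_le1 c n : (1 <= n)%nat -> wt c n <= 1.
Proof. intros Hn. apply exp_le_1. generalize (Hc_pos _ _ _ RDW c n Hn). nra. Qed.

Lemma Phi_run_step c n y : (1 <= n)%nat ->
  Phi (prep c n (scons (negb c) y)) =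
  r * (wt (negb c) n * Phi (scons (negb c) (prep c n (scons (negb c) y))) + Phi (prep c (S n) (scons (negb c) y))).
Proof.
  intros Hn. rewrite Phi_fix at 1. rewrite (transfer_e _ _ _ _ (negb c)). rewrite negb_involutive.
  rewrite H_runpt by auto. rewrite (H_same _ _ _ RDW (scons c _)).
  2:{ simpl. rewrite pre_0; auto. }
  replace (- beta * 0) with 0 by ring. rewrite exp_0. unfold wt. simpl. ring.
Qed.

Lemma Phi_expand c s y J : (1 <= s)%nat ->
  Phi (prep c s (scons (negb c) y)) =
  fs (fun j => r ^ (S j) * wt (negb c) (s + j) * Phi (scons (negb c) (prep c (s + j) (scons (negb c) y)))) J
  + r ^ J * Phi (prep c (s + J) (scons (negb c) y)).
Proof.
  intros Hs. induction J.
  - simpl. rewrite Nat.add_0_r. ring.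
  - rewrite IHJ. simpl fs. rewrite (Phi_run_step c (s + J)) by lia.
    replace (s + S J)%nat with (S (s + J)) by lia. simpl. ring.
Qed.

Definition Wsum (c : bool) (J : nat) : R := fs (fun j => r ^ (S j) * wt c (S j)) J.

Lemma Wsum_nonneg c J : 0 <= Wsum c J.
Proof. apply fs_nonneg. intros i. generalize (wt_pos c (S i)) (pow_le r (S i) (Rlt_le _ _ r_pos)). nra. Qed.
Lemma Wsum_le c J : Wsum c J <= INR J.
Proof.
  unfold Wsum. rewrite <- (Rmult_1_r (INR J)). apply fs_bound. intros i.
  generalize (wt_le1 c (S i) ltac:(lia)) (wt_pos c (S i)) (pow_le r (S i) (Rlt_le _ _ r_pos)).
  assert (r ^ S i <= 1) by (apply pow_le_one; generalize r_pos r_lt1; lra). nra.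
Qed.
Lemma Wsum_mono c I J : (I <= J)%nat -> Wsum c I <= Wsum c J.
Proof. intros; apply fs_mono; auto. intros i. generalize (wt_pos c (S i)) (pow_le r (S i) (Rlt_le _ _ r_pos)). nra. Qed.

Definition Dp (e : bool) (L : nat) (d : R) : Prop :=
  forall y y', agree L y y' -> Rabs (Phi (scons e (scons (negb e) y)) - Phi (scons e (scons (negb e) y'))) <= d.

Lemma Phi_diff1 x y : Rabs (Phi x - Phi y) <= 1.
Proof. generalize (Phi_pos x) (Phi_pos y) (Phi_le1 x) (Phi_le1 y). intros. apply Rabs_le. lra. Qed.

Lemma ExpDiff e L d J : 0 <= d -> Dp (negb e) (S L) d -> Dp e L (Wsum (negb e) J * d + r ^ J).
Proof.
  intros Hd HD y y' Hy.
  assert (P := Phi_expand e 1 y J ltac:(lia)). assert (P' := Phi_expand e 1 y' J ltac:(lia)).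
  simpl prep in P, P'. rewrite P, P'.
  match goal with |- Rabs (?a + ?b - (?c + ?d)) <= _ => replace (a + b - (c + d)) with ((a - c) + (b - d)) by ring end.
  eapply Rle_trans; [apply Rabs_triang|]. apply Rplus_le_compat.
  - unfold Wsum. rewrite Rmult_comm, <- fs_scal.
    assert (G : forall (f g : nat -> R) n, Rabs (fs f n - fs g n) <= fs (fun i => Rabs (f i - g i)) n).
    { intros f g n; induction n; simpl. rewrite Rminus_0_r, Rabs_R0; lra.
      replace (fs f n + f n - (fs g n + g n)) with ((fs f n - fs g n) + (f n - g n)) by ring.
      eapply Rle_trans; [apply Rabs_triang|]. lra. }
    eapply Rle_trans; [apply G|]. apply fs_le. intros j Hj.
    replace (1 + j)%nat with (S j) by lia.
    set (w := r ^ S j * wt (negb e) (S j)).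
    assert (Hw : 0 <= w) by (unfold w; generalize (wt_pos (negb e) (S j)) (pow_le r (S j) (Rlt_le _ _ r_pos)); nra).
    simpl prep.
    assert (HDi := HD (prep e j (scons (negb e) y)) (prep e j (scons (negb e) y'))).
    rewrite negb_involutive in HDi.
    assert (HDi' : Rabs (Phi (scons (negb e) (scons e (prep e j (scons (negb e) y)))) -
                        Phi (scons (negb e) (scons e (prep e j (scons (negb e) y'))))) <= d).
    { apply HDi. apply (agree_le (j + S L)). lia. apply agree_pre. apply agree_scons. auto. }
    rewrite <- Rmult_minus_distr_l, Rabs_mult, (Rabs_right w) by lra. nra.
  - rewrite <- Rmult_minus_distr_l, Rabs_mult, Rabs_right by (apply Rle_ge, pow_le; generalize r_pos; lra).
    match goal with |- _ * Rabs (Phi ?a - Phi ?b) <= _ => generalize (Phi_diff1 a b) end.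
    generalize (pow_le r J (Rlt_le _ _ r_pos)). nra.
Qed.

Lemma wH_same e x : x O = e -> exp (- beta * H (scons e x)) = 1.
Proof. intros Hx. rewrite (H_same _ _ _ RDW) by (simpl; auto). replace (- beta * 0) with 0 by ring. apply exp_0. Qed.

Lemma crun_S_head c s x : crun c (S s) x <> 0 -> x O = c.
Proof. unfold crun, ind. simpl. destruct (x O), c; simpl; auto; intros H'; exfalso; apply H'; auto. Qed.
Lemma cpre_S_head c s x : cpre c (S s) x <> 0 -> x O = c.
Proof. unfold cpre, ind. simpl. destruct (x O), c; simpl; auto; intros H'; exfalso; apply H'; auto. Qed.

Lemma crun_cases c n x : crun c n x = 0 \/ crun c n x = 1.
Proof. unfold crun, ind. destruct (_ && _); auto. Qed.

Lemma nu_crun_rec c s : nu (crun c (S (S s))) = r * nu (crun c (S s)).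
Proof.
  rewrite nu_transfer by apply cont_crun. f_equal. apply nu_ext. intros x.
  rewrite (transfer_e _ _ _ _ c). rewrite crun_scons_eq, crun_scons_neq by (destruct c; simpl; discriminate).
  destruct (Req_dec (crun c (S s) x) 0) as [E|E]. rewrite E; ring.
  rewrite wH_same by (apply (crun_S_head c s x E)). ring.
Qed.

Lemma nu_crun c s : nu (crun c (S s)) = r ^ s * nu (crun c 1).
Proof. induction s. simpl; ring. rewrite nu_crun_rec, IHs. simpl; ring. Qed.

Lemma nu_cpre_le c n : nu (cpre c n) <= r ^ n.
Proof.
  induction n.
  - simpl. rewrite (nu_ext _ (fun _ => 1)) by (intros; reflexivity). rewrite nu_one; lra.
  - rewrite nu_transfer by apply cont_cpre. simpl.
    assert (nu (transfer H beta (cpre c (S n))) <= nu (cpre c n)).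
    { apply nu_mono. apply cont_transfer, cont_cpre. apply cont_cpre. intros x.
      rewrite (transfer_e _ _ _ _ c). rewrite cpre_scons_eq, cpre_scons_neq by (destruct c; simpl; discriminate).
      generalize (wH_le1 c x) (wH_pos c x) (cpre_01 c n x). nra. }
    generalize r_pos; nra.
Qed.

Definition Tf (c : bool) (N : nat) (x : Sigma) : R := exp (- beta * H (scons c x)) * cpre (negb c) (S N) x.

Lemma cont_Tf c N : continuous_Sigma (Tf c N).
Proof. apply cont_mult. apply cont_wH. apply cont_cpre. Qed.

Lemma Tf_split c N x : Tf c N x = wt c (S N) * crun (negb c) (S N) x + Tf c (S N) x.
Proof.
  unfold Tf. rewrite (cpre_split (negb c) (S N) x). rewrite Rmult_plus_distr_l. f_equal.
  destruct (Req_dec (crun (negb c) (S N) x) 0) as [E|E]. rewrite E; ring.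
  assert (E1 : crun (negb c) (S N) x = 1) by (destruct (crun_cases (negb c) (S N) x); tauto).
  rewrite E1. rewrite (crun_repr _ _ _ E1). rewrite negb_involutive.
  rewrite (proj1 (H_run _ _ _ RDW c (S N) _ ltac:(lia))). unfold wt. ring.
Qed.

Lemma nu_Tf c N : nu (Tf c 0) = fs (fun s => wt c (S s) * (r ^ s * nu (crun (negb c) 1))) N + nu (Tf c N).
Proof.
  induction N. simpl; ring.
  rewrite IHN. simpl fs. rewrite (nu_ext (Tf c N) (fun x => wt c (S N) * crun (negb c) (S N) x + Tf c (S N) x)) by apply Tf_split.
  rewrite nu_plus, nu_scal, (nu_crun (negb c) N); try apply cont_crun; try apply cont_Tf. ring. apply cont_scal, cont_crun.
Qed.

Lemma nu_crun1 c : nu (crun c 1) = r * nu (Tf c 0).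
Proof.
  rewrite nu_transfer by apply cont_crun. f_equal. apply nu_ext. intros x.
  rewrite (transfer_e _ _ _ _ c). rewrite crun_scons_eq, crun_scons_neq by (destruct c; simpl; discriminate).
  unfold Tf. replace (crun c 0 x) with (cpre (negb c) 1 x). ring. unfold crun, cpre, ind; simpl; destruct (x O), c; reflexivity.
Qed.

Lemma nu_crun1_ge c N : Wsum c N * nu (crun (negb c) 1) <= nu (crun c 1).
Proof.
  rewrite (nu_crun1 c), (nu_Tf c N).
  assert (0 <= nu (Tf c N)) by (apply nu_pos; [apply cont_Tf|intros x; unfold Tf; generalize (wH_pos c x) (cpre_01 (negb c) (S N) x); nra]).
  unfold Wsum. rewrite Rmult_comm, <- fs_scal.
  assert (E : fs (fun i => nu (crun (negb c) 1) * (r ^ S i * wt c (S i))) N = r * fs (fun s => wt c (S s) * (r ^ s * nu (crun (negb c) 1))) N).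
  { rewrite <- fs_scal. apply fs_ext. intros; simpl; ring. }
  rewrite E. generalize r_pos; nra.
Qed.

Lemma H_bound : exists M, 0 <= M /\ forall x, H x <= M.
Proof.
  destruct (cont_bounded H (H_cont _ _ _ RDW)) as [M HM]. exists M. split.
  generalize (HM (fun _ => false)) (Rabs_pos (H (fun _ => false))); lra.
  intros x. generalize (HM x) (Rle_abs (H x)); lra.
Qed.

Lemma nu_crun_pos c : 0 < nu (crun c 1).
Proof.
  destruct H_bound as [M [HM0 HM]].
  set (m := exp (- beta * M)). assert (Hm : 0 < m) by apply exp_pos.
  assert (Hwm : forall e x, m <= exp (- beta * H (scons e x))).
  { intros e x. unfold m. destruct (Req_dec (- beta * M) (- beta * H (scons e x))) as [E|E]. rewrite E; lra.
    left. apply exp_increasing. specialize (HM (scons e x)). nra. }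
  assert (P1 : r * m <= nu (cpre (negb c) 1)).
  { rewrite nu_transfer by apply cont_cpre. apply Rmult_le_compat_l. generalize r_pos; lra.
    rewrite <- (nu_const m). apply nu_mono. apply cont_const. apply cont_transfer, cont_cpre.
    intros x. rewrite (transfer_e _ _ _ _ (negb c)). rewrite (cpre_scons_neq (negb c) 0 (negb (negb c)) x) by (destruct c; simpl; discriminate).
    unfold cpre, ind. simpl. rewrite Bool.eqb_reflx. simpl. generalize (Hwm (negb c) x); lra. }
  rewrite nu_crun1.
  assert (m * nu (cpre (negb c) 1) <= nu (Tf c 0)).
  { rewrite <- nu_scal by apply cont_cpre. apply nu_mono. apply cont_scal, cont_cpre. apply cont_Tf.
    intros x. unfold Tf. generalize (Hwm c x) (cpre_01 (negb c) 1 x). nra. }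
  generalize r_pos; intros. assert (0 < r * m) by nra. nra.
Qed.

Lemma Wsum_prod c I J : Wsum c I * Wsum (negb c) J <= 1.
Proof.
  set (M := (I + J)%nat).
  assert (A1 := nu_crun1_ge c M). assert (A2 := nu_crun1_ge (negb c) M). rewrite negb_involutive in A2.
  assert (P1 := nu_crun_pos c). assert (P2 := nu_crun_pos (negb c)).
  assert (Wsum c I <= Wsum c M) by (apply Wsum_mono; lia).
  assert (Wsum (negb c) J <= Wsum (negb c) M) by (apply Wsum_mono; lia).
  generalize (Wsum_nonneg c I) (Wsum_nonneg (negb c) J) (Wsum_nonneg c M) (Wsum_nonneg (negb c) M). intros.
  assert (Wsum c M * Wsum (negb c) M * nu (crun c 1) <= nu (crun c 1)) by nra.
  assert (Wsum c M * Wsum (negb c) M <= 1).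
  { apply (Rmult_le_reg_r (nu (crun c 1))); auto. lra. }
  nra.
Qed.

Lemma Dp_mono e L L' d : (L <= L')%nat -> Dp e L d -> Dp e L' d.
Proof. intros Hl HD y y' Hy. apply HD. apply (agree_le L'); auto. Qed.

Lemma Dp_big e eps : 0 < eps -> exists N, Dp e N eps.
Proof.
  intros He. destruct (unif_cont Phi Phi_cont eps He) as [N HN]. exists N.
  intros y y' Hy. left. apply HN. apply (agree_le (S (S N))). lia. apply agree_scons, agree_scons; auto.
Qed.

Lemma Dp_step e L eps : 0 <= eps -> Dp e (S (S L)) eps -> Dp e L eps.
Proof.
  intros He HD y y' Hy.
  assert (K : forall I J, Rabs (Phi (scons e (scons (negb e) y)) - Phi (scons e (scons (negb e) y'))) <= (eps + r ^ J) + INR J * r ^ I).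
  { intros I J.
    assert (D1 : Dp (negb e) (S L) (Wsum e I * eps + r ^ I)).
    { generalize (ExpDiff (negb e) (S L) eps I He). rewrite !negb_involutive. auto. }
    assert (D2 := ExpDiff e L (Wsum e I * eps + r ^ I) J ltac:(generalize (Wsum_nonneg e I) (pow_le r I (Rlt_le _ _ r_pos)); nra) D1 y y' Hy).
    eapply Rle_trans; [apply D2|].
    assert (Wsum (negb e) J * Wsum e I <= 1). { rewrite Rmult_comm. apply Wsum_prod. }
    generalize (Wsum_le (negb e) J) (Wsum_nonneg (negb e) J) (pow_le r I (Rlt_le _ _ r_pos)). nra. }
  apply (le_of_pow r _ _ 1). generalize r_pos r_lt1; lra. lra. intros J.
  apply (le_of_pow r _ _ (INR J)). generalize r_pos r_lt1; lra. apply pos_INR. intros I.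
  specialize (K I J). lra.
Qed.

Lemma Phi_const e y y' : Phi (scons e (scons (negb e) y)) = Phi (scons e (scons (negb e) y')).
Proof.
  apply Rminus_diag_uniq. apply abs_le0.
  apply Rle_plus_epsilon. intros eps He. rewrite Rplus_0_l.
  destruct (Dp_big e eps He) as [N HN].
  assert (G : forall k L, (N <= L + k)%nat -> Dp e L eps).
  { induction k; intros L HL. apply (Dp_mono e N); auto; lia.
    apply Dp_step; [lra|]. apply IHk. lia. }
  apply (G N O ltac:(lia)). intros i Hi; lia.
Qed.

Definition zero : Sigma := fun _ => false.
Definition phi (e : bool) : R := Phi (scons e (scons (negb e) zero)).
Definition F (c : bool) (s : nat) : R := Phi (prep c s (scons (negb c) zero)).

Lemma phi_pos e : 0 < phi e. Proof. apply Phi_pos. Qed.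

Lemma Phi_const2 e y : Phi (scons e (scons (negb e) y)) = phi e.
Proof. apply Phi_const. Qed.

Lemma Phi_run_expand c s y J : (1 <= s)%nat ->
  Phi (prep c s (scons (negb c) y)) =
  phi (negb c) * fs (fun j => r ^ (S j) * wt (negb c) (s + j)) J + r ^ J * Phi (prep c (s + J) (scons (negb c) y)).
Proof.
  intros Hs. rewrite (Phi_expand c s y J) by auto. f_equal. rewrite <- fs_scal. apply fs_ext. intros j.
  destruct (s + j)%nat eqn:E; [lia|]. simpl prep.
  rewrite <- (Phi_const2 (negb c) (prep c n (scons (negb c) y))), negb_involutive. ring.
Qed.

Lemma Phi_run_const c s y : (1 <= s)%nat -> Phi (prep c s (scons (negb c) y)) = F c s.
Proof.
  intros Hs. unfold F. apply Rminus_diag_uniq. apply abs_le0.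
  apply (le_of_pow r _ _ 1). generalize r_pos r_lt1; lra. lra. intros J.
  rewrite (Phi_run_expand c s y J), (Phi_run_expand c s zero J) by auto.
  match goal with |- Rabs (?a + ?b - (?a + ?d)) <= _ => replace (a + b - (a + d)) with (b - d) by ring end.
  rewrite <- Rmult_minus_distr_l, Rabs_mult, Rabs_right by (apply Rle_ge, pow_le; generalize r_pos; lra).
  match goal with |- _ * Rabs (Phi ?a - Phi ?b) <= _ => generalize (Phi_diff1 a b) end.
  generalize (pow_le r J (Rlt_le _ _ r_pos)). nra.
Qed.

Lemma F_rec c s : (1 <= s)%nat -> F c s = r * (wt (negb c) s * phi (negb c) + F c (S s)).
Proof.
  intros Hs. unfold F at 1. rewrite Phi_run_step by auto.
  rewrite (Phi_run_const c (S s)) by lia.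
  destruct s; [lia|]. simpl prep. rewrite <- (Phi_const2 (negb c) (prep c s (scons (negb c) zero))), negb_involutive. ring.
Qed.

Lemma F_1 c : F c 1 = phi c.
Proof. unfold F, phi. reflexivity. Qed.

Lemma F_pos c s : 0 < F c s. Proof. apply Phi_pos. Qed.
Lemma F_le1 c s : F c s <= 1. Proof. apply Phi_le1. Qed.

Lemma Phi_crun e s x : Phi x * crun e (S s) x = F e (S s) * crun e (S s) x.
Proof.
  destruct (crun_cases e (S s) x) as [E|E]; rewrite E; [ring|].
  rewrite (crun_repr _ _ _ E) at 1. rewrite Phi_run_const by lia. ring.
Qed.

Lemma cont_Phi_cpre e n : continuous_Sigma (fun x => Phi x * cpre e n x).
Proof. apply cont_mult. apply Phi_cont. apply cont_cpre. Qed.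

Lemma nu_Phi_cpre e N : nu (fun x => Phi x * cpre e 1 x) =
  fs (fun m => F e (S m) * (r ^ m * nu (crun e 1))) N + nu (fun x => Phi x * cpre e (S N) x).
Proof.
  induction N. simpl; ring.
  rewrite IHN. simpl fs.
  rewrite (nu_ext (fun x => Phi x * cpre e (S N) x) (fun x => F e (S N) * crun e (S N) x + Phi x * cpre e (S (S N)) x)).
  2:{ intros x. rewrite (cpre_split e (S N) x). rewrite Rmult_plus_distr_l, Phi_crun. ring. }
  rewrite nu_plus, nu_scal, (nu_crun e N); try apply cont_crun; try apply cont_Phi_cpre. ring. apply cont_scal, cont_crun.
Qed.

Definition S1 (c : bool) (N : nat) : R := fs (fun m => INR (S m) * r ^ (S m) * wt c (S m)) N.

Lemma abel (E : nat -> R) N : fs E N = fs (fun m => INR (S m) * (E m - E (S m))) N + INR N * E N.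
Proof.
  induction N. simpl; ring. cbn [fs]. rewrite IHN. rewrite !S_INR. ring.
Qed.

Lemma Esum e N : fs (fun m => F e (S m) * r ^ m) N = phi (negb e) * S1 (negb e) N + INR N * (r ^ N * F e (S N)).
Proof.
  rewrite (abel (fun m => F e (S m) * r ^ m)). rewrite Rmult_comm with (r1 := F e (S N)). f_equal.
  unfold S1. rewrite <- fs_scal. apply fs_ext. intros m.
  rewrite (F_rec e (S m)) by lia. simpl pow. ring.
Qed.

Lemma nu_Phi_upper e N : nu (fun x => Phi x * cpre e 1 x) <=
  nu (crun e 1) * (phi (negb e) * S1 (negb e) N + INR N * r ^ N) + r ^ (S N).
Proof.
  rewrite (nu_Phi_cpre e N).
  assert (E : fs (fun m => F e (S m) * (r ^ m * nu (crun e 1))) N = nu (crun e 1) * fs (fun m => F e (S m) * r ^ m) N).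
  { rewrite <- fs_scal. apply fs_ext; intros; ring. }
  rewrite E, Esum.
  assert (nu (fun x => Phi x * cpre e (S N) x) <= r ^ S N).
  { eapply Rle_trans; [|apply (nu_cpre_le e (S N))]. apply nu_mono. apply cont_Phi_cpre. apply cont_cpre.
    intros x. generalize (Phi_le1 x) (Phi_pos x) (cpre_01 e (S N) x). nra. }
  assert (r ^ N * F e (S N) <= r ^ N) by (generalize (F_le1 e (S N)) (pow_le r N (Rlt_le _ _ r_pos)); nra).
  assert (0 <= nu (crun e 1)) by (generalize (nu_crun_pos e); lra).
  assert (0 <= INR N) by apply pos_INR.
  assert (INR N * (r ^ N * F e (S N)) <= INR N * r ^ N) by (apply Rmult_le_compat_l; auto).
  nra.
Qed.

Lemma nu_Phi_lower e N : nu (crun e 1) * (phi (negb e) * S1 (negb e) N) <= nu (fun x => Phi x * cpre e 1 x).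
Proof.
  rewrite (nu_Phi_cpre e N).
  assert (E : fs (fun m => F e (S m) * (r ^ m * nu (crun e 1))) N = nu (crun e 1) * fs (fun m => F e (S m) * r ^ m) N).
  { rewrite <- fs_scal. apply fs_ext; intros; ring. }
  rewrite E, Esum.
  assert (0 <= nu (fun x => Phi x * cpre e (S N) x)).
  { apply nu_pos. apply cont_Phi_cpre. intros x. generalize (Phi_pos x) (cpre_01 e (S N) x). nra. }
  assert (0 <= r ^ N * F e (S N)) by (generalize (F_pos e (S N)) (pow_le r N (Rlt_le _ _ r_pos)); nra).
  assert (0 <= nu (crun e 1)) by (generalize (nu_crun_pos e); lra).
  assert (0 <= INR N) by apply pos_INR.
  assert (0 <= INR N * (r ^ N * F e (S N))) by (apply Rmult_le_pos; auto).
  nra.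
Qed.

Lemma phi_ratio_bounds e J : Wsum (negb e) J * phi (negb e) <= phi e <= Wsum (negb e) J * phi (negb e) + r ^ J.
Proof.
  assert (P := Phi_run_expand e 1 zero J ltac:(lia)). simpl prep in P. fold (phi e) in P.
  unfold Wsum.
  assert (E : fs (fun j => r ^ S j * wt (negb e) (1 + j)) J = fs (fun j => r ^ S j * wt (negb e) (S j)) J) by (apply fs_ext; intros; reflexivity).
  rewrite E in P.
  match goal with P : _ = _ + r ^ J * Phi ?a |- _ => generalize (Phi_pos a) (Phi_le1 a) end.
  generalize (pow_le r J (Rlt_le _ _ r_pos)). intros. split; nra.
Qed.

Lemma ratio_bound c Sup Slow (g : nat -> R) :
  (forall N, S1 c N <= Sup) ->
  (forall N, Slow - g N <= S1 (negb c) N) -> (forall e, 0 < e -> exists N, g N < e) -> 0 < Slow ->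
  nu (fun x => Phi x * cpre (negb c) 1 x) <=
  (phi c / phi (negb c)) ^ 2 * Sup / Slow * nu (fun x => Phi x * cpre c 1 x).
Proof.
  intros HSup HSlow Hg HSl.
  set (nc := nu (crun c 1)). set (nd := nu (crun (negb c) 1)).
  assert (Pc : 0 < nc) by apply nu_crun_pos. assert (Pd : 0 < nd) by apply nu_crun_pos.
  assert (pc := phi_pos c). assert (pd := phi_pos (negb c)).
  assert (Sup0 : 0 <= Sup) by (generalize (HSup O); unfold S1; simpl; lra).
  assert (Num : nu (fun x => Phi x * cpre (negb c) 1 x) <= nd * phi c * Sup).
  { apply (le_of_lim _ _ (fun N => (nd + 1) * (INR N * r ^ N) + r ^ N)).
    - intros N. generalize (nu_Phi_upper (negb c) N). rewrite negb_involutive. fold nd.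
      generalize (HSup N). intros.
      assert (nd * (phi c * S1 c N) <= nd * (phi c * Sup)) by (apply Rmult_le_compat_l; nra).
      assert (r ^ S N <= r ^ N) by (apply pow_decr; [generalize r_pos r_lt1; lra|lia]).
      assert (0 <= INR N * r ^ N) by (apply Rmult_le_pos; [apply pos_INR|apply pow_le; generalize r_pos; lra]).
      nra.
    - intros e He. destruct (npow_lim r ltac:(generalize r_pos r_lt1; lra) (e / (2 * (nd + 2)))) as [N [HN1 HN]].
      { apply Rdiv_lt_0_compat; lra. }
      exists N.
      assert (r ^ N <= INR N * r ^ N).
      { rewrite <- (Rmult_1_l (r ^ N)) at 1. apply Rmult_le_compat_r. apply pow_le; generalize r_pos; lra.
        replace 1 with (INR 1) by reflexivity. apply le_INR; auto. }
      assert (Hlt : (nd + 2) * (INR N * r ^ N) < (nd + 2) * (e / (2 * (nd + 2)))) by (apply Rmult_lt_compat_l; lra).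
      replace ((nd + 2) * (e / (2 * (nd + 2)))) with (e / 2) in Hlt by (field; lra).
      nra. }
  assert (Den1 : nc * phi (negb c) * Slow <= nu (fun x => Phi x * cpre c 1 x)).
  { apply (le_of_lim _ _ (fun N => nc * phi (negb c) * g N)).
    - intros N. generalize (nu_Phi_lower c N) (HSlow N). fold nc. intros.
      assert (nc * phi (negb c) * (Slow - g N) <= nc * phi (negb c) * S1 (negb c) N) by (apply Rmult_le_compat_l; nra).
      nra.
    - intros e He. destruct (Hg (e / (nc * phi (negb c)))) as [N HN].
      { apply Rdiv_lt_0_compat; nra. }
      exists N. assert (0 < nc * phi (negb c)) by nra.
      apply (Rmult_lt_compat_l (nc * phi (negb c))) in HN; auto.
      replace (nc * phi (negb c) * (e / (nc * phi (negb c)))) with e in HN by (field; lra). lra. }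
  assert (NC : phi (negb c) / phi c * nd <= nc).
  { apply (le_of_pow r _ _ (nd / phi c)). generalize r_pos r_lt1; lra. apply Rlt_le, Rdiv_lt_0_compat; auto.
    intros J. generalize (nu_crun1_ge c J) (phi_ratio_bounds (negb c) J). rewrite negb_involutive. fold nc nd.
    intros A [_ B]. 
    assert (phi (negb c) / phi c <= Wsum c J + r ^ J / phi c).
    { apply (Rmult_le_reg_r (phi c)); auto. unfold Rdiv. rewrite Rmult_plus_distr_r, !Rmult_assoc, Rinv_l by lra. lra. }
    assert (phi (negb c) / phi c * nd <= (Wsum c J + r ^ J / phi c) * nd) by (apply Rmult_le_compat_r; lra).
    replace (nd / phi c * r ^ J) with (r ^ J / phi c * nd) by (field; lra). nra. }
  set (D := nu (fun x => Phi x * cpre c 1 x)) in *.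
  assert (Dpos : 0 < D) by (assert (0 < nc * phi (negb c) * Slow) by (apply Rmult_lt_0_compat; nra); lra).
  assert (K : (phi c / phi (negb c)) ^ 2 * Sup / Slow * D >= (phi c / phi (negb c)) ^ 2 * Sup / Slow * (phi (negb c) / phi c * nd * phi (negb c) * Slow)).
  { apply Rle_ge, Rmult_le_compat_l. unfold Rdiv. apply Rmult_le_pos; [apply Rmult_le_pos; [apply pow2_ge_0|auto]|]. apply Rlt_le, Rinv_0_lt_compat; auto.
    assert (phi (negb c) / phi c * nd * phi (negb c) * Slow <= nc * phi (negb c) * Slow).
    { apply Rmult_le_compat_r; [lra|]. apply Rmult_le_compat_r; lra. }
    lra. }
  replace ((phi c / phi (negb c)) ^ 2 * Sup / Slow * (phi (negb c) / phi c * nd * phi (negb c) * Slow)) with (nd * phi c * Sup) in K by (field; lra).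
  lra.
Qed.

Lemma nuPhi_split c : nu Phi = nu (fun x => Phi x * cpre c 1 x) + nu (fun x => Phi x * cpre (negb c) 1 x).
Proof.
  rewrite <- nu_plus by apply cont_Phi_cpre. apply nu_ext. intros x.
  unfold cpre, ind. simpl. destruct (x O), c; simpl; ring.
Qed.

Lemma nuPhi_c_pos c : 0 < nu (fun x => Phi x * cpre c 1 x).
Proof.
  apply Rlt_le_trans with (nu (fun x => F c 1 * crun c 1 x)).
  - rewrite nu_scal by apply cont_crun. generalize (F_pos c 1) (nu_crun_pos c). nra.
  - apply nu_mono. apply cont_scal, cont_crun. apply cont_Phi_cpre. intros x.
    rewrite <- (Phi_crun c 0 x). rewrite (cpre_split c 1 x). generalize (Phi_pos x) (cpre_01 c 2 x). nra.
Qed.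

Lemma nuPhi_pos : 0 < nu Phi.
Proof. rewrite (nuPhi_split true). generalize (nuPhi_c_pos true) (nuPhi_c_pos false). simpl. lra. Qed.

Lemma gibbs_plus f g : continuous_Sigma f -> continuous_Sigma g -> gibbs Phi nu (fun x => f x + g x) = gibbs Phi nu f + gibbs Phi nu g.
Proof.
  intros Hf Hg. unfold gibbs. rewrite (nu_ext _ (fun x => Phi x * f x + Phi x * g x)) by (intros; ring).
  rewrite nu_plus by (apply cont_mult; auto; apply Phi_cont). field. generalize nuPhi_pos; lra.
Qed.
Lemma gibbs_scal a f : continuous_Sigma f -> gibbs Phi nu (fun x => a * f x) = a * gibbs Phi nu f.
Proof.
  intros Hf. unfold gibbs. rewrite (nu_ext _ (fun x => a * (Phi x * f x))) by (intros; ring).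
  rewrite nu_scal by (apply cont_mult; auto; apply Phi_cont). field. generalize nuPhi_pos; lra.
Qed.
Lemma gibbs_pos f : continuous_Sigma f -> (forall x, 0 <= f x) -> 0 <= gibbs Phi nu f.
Proof.
  intros Hf Hp. unfold gibbs. apply Rmult_le_pos. apply nu_pos. apply cont_mult; auto; apply Phi_cont.
  intros x; generalize (Phi_pos x) (Hp x); nra. generalize nuPhi_pos; intros; left; apply Rinv_0_lt_compat; auto.
Qed.
Lemma gibbs_one : gibbs Phi nu (fun _ => 1) = 1.
Proof. unfold gibbs. rewrite (nu_ext _ Phi) by (intros; ring). field. generalize nuPhi_pos; lra. Qed.
Lemma gibbs_shift f : continuous_Sigma f -> gibbs Phi nu (fun x => f (shift x)) = gibbs Phi nu f.
Proof.
  intros Hf. unfold gibbs. f_equal.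
  rewrite nu_transfer by (apply cont_mult; [apply Phi_cont|apply cont_shift; auto]).
  rewrite (nu_ext _ (fun x => lam * (Phi x * f x))).
  - rewrite nu_scal by (apply cont_mult; auto; apply Phi_cont). unfold r. field. generalize lam_gt1; lra.
  - intros x. unfold shift. replace (lam * (Phi x * f x)) with ((lam * Phi x) * f x) by ring. rewrite <- (Phi_eig x). unfold transfer. simpl. change (fun i => x i) with x. ring.
Qed.

Lemma gibbs_small c : gibbs Phi nu (cpre (negb c) 1) <= nu (fun x => Phi x * cpre (negb c) 1 x) / nu (fun x => Phi x * cpre c 1 x).
Proof.
  unfold gibbs. rewrite (nuPhi_split c). generalize (nuPhi_c_pos c) (nuPhi_c_pos (negb c)). intros.
  unfold Rdiv. apply Rmult_le_compat_l; [lra|]. apply Rinv_le_contravar; lra.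
Qed.

Lemma rr_half : 1/2 <= r < 1.
Proof. generalize r_ge_half r_lt1; lra. Qed.

Lemma Gs_pos m : 0 < Gs r m.
Proof.
  unfold Gs. generalize r_pos r_lt1 (pos_INR m). intros. apply Rmult_lt_0_compat.
  apply Rmult_lt_0_compat. apply pow_lt; lra. nra. apply Rinv_0_lt_compat, pow_lt; lra.
Qed.

Lemma Gg_small_from e0 Q : 0 < e0 -> exists J, Gg r (S (Nat.max J Q)) < e0.
Proof.
  intros He0. generalize r_pos r_lt1; intros.
  destruct (pow_lt_1_zero r ltac:(rewrite Rabs_right; lra) (e0 * (1 - r))) as [N HN]. nra.
  exists N. unfold Gg. specialize (HN (S (Nat.max N Q)) ltac:(lia)).
  rewrite Rabs_right in HN by (apply Rle_ge, pow_le; lra).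
  apply (Rmult_lt_reg_r (1 - r)). lra. unfold Rdiv. rewrite Rmult_assoc, Rinv_l by lra. lra.
Qed.

Lemma ratio_AB c P d e :
  0 <= d -> 0 <= e ->
  (forall t, (1 <= t <= P)%nat -> wt c t <= d) -> (forall t, (P < t)%nat -> e <= wt c t) ->
  e * Gg r (S P) <= phi (negb c) / phi c <= d * INR P + Gg r (S P).
Proof.
  intros Hd He H1' H2'. generalize r_pos r_lt1; intros.
  assert (pc := phi_pos c). assert (pd := phi_pos (negb c)).
  assert (Hw : forall t, (1 <= t)%nat -> 0 <= wt c t <= 1) by (intros t Ht; split; [left; apply wt_pos|apply wt_le1; auto]).
  assert (HWs : forall J, Wsum c J * phi c <= phi (negb c) <= Wsum c J * phi c + r ^ J).
  { intros J. generalize (phi_ratio_bounds (negb c) J). rewrite negb_involutive. auto. }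
  split.
  - apply (le_of_lim _ _ (fun J => e * Gg r (S (Nat.max J P)))).
    + intros J. assert (G := GS2 r ltac:(lra) (wt c) e P He H2' (fun t => Rlt_le _ _ (wt_pos c t)) J).
      fold (Wsum c J) in G.
      assert (Wsum c J <= phi (negb c) / phi c).
      { apply (Rmult_le_reg_r (phi c)); auto. unfold Rdiv. rewrite Rmult_assoc, Rinv_l by lra. rewrite Rmult_1_r. apply HWs. }
      lra.
    + intros e0 He0. destruct (Req_dec e 0) as [E|E].
      { exists O. rewrite E. lra. }
      destruct (Gg_small_from (e0 / e) P) as [J HJ]. apply Rdiv_lt_0_compat; lra.
      exists J. apply (Rmult_lt_compat_l e) in HJ; [|lra]. replace (e * (e0 / e)) with e0 in HJ by (field; auto). auto.
  - apply (le_of_pow r _ _ (/ phi c)). lra. left; apply Rinv_0_lt_compat; auto. intros J.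
    assert (G := GS1 r ltac:(lra) (wt c) d P H1' Hw J). fold (Wsum c J) in G.
    assert (HminP : INR (Nat.min J P) <= INR P) by (apply le_INR; lia).
    assert (Gg r (S (Nat.max J P)) >= 0) by (apply Rle_ge, Gg_nonneg; lra).
    assert (Wsum c J <= d * INR P + Gg r (S P)) by nra.
    assert (phi (negb c) / phi c <= Wsum c J + r ^ J * / phi c).
    { apply (Rmult_le_reg_r (phi c)); auto. unfold Rdiv. rewrite Rmult_plus_distr_r, !Rmult_assoc, Rinv_l by lra. rewrite !Rmult_1_r. apply HWs. }
    lra.
Qed.

Lemma per_k c P Q d e W :
  (P < Q)%nat -> 0 < d <= 1 -> 1/2 <= e <= 1 -> 1 <= W ->
  W ^ 2 * exp (4 * W) < INR (S Q) ^ 2 * e ^ 2 ->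
  d ^ 2 * INR Q ^ 2 + 2 * d * INR Q * INR (S Q) <= 1/2 ->
  (forall t, (1 <= t <= P)%nat -> wt c t <= d) -> (forall t, (P < t)%nat -> e <= wt c t) ->
  (forall t, (1 <= t <= Q)%nat -> wt (negb c) t <= d) -> (forall t, (Q < t)%nat -> e <= wt (negb c) t) ->
  gibbs Phi nu (cpre (negb c) 1) <=
  ((4 * d ^ 2 * INR Q ^ 2 + 2) * (d * INR P * INR P) + 8 * d ^ 2 * INR Q ^ 2 * (INR (S P) * INR (S Q) + INR (S Q) ^ 2)
    + (2 / e ^ 2) * (INR (S P) / INR (S Q) + 1 / W)) / e.
Proof.
  intros HPQ Hd He HW HWQ Hsm h1 h2 h3 h4.
  generalize r_pos r_lt1; intros.
  assert (pc := phi_pos c). assert (pd := phi_pos (negb c)).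
  assert (RA := ratio_AB c P d e ltac:(lra) ltac:(lra) h1 h2).
  assert (RB := ratio_AB (negb c) Q d e ltac:(lra) ltac:(lra) h3 h4). rewrite negb_involutive in RB.
  set (A := phi (negb c) / phi c) in *. set (B := phi c / phi (negb c)) in *.
  assert (HA : 0 < A) by (apply Rdiv_lt_0_compat; auto).
  assert (HB : 0 < B) by (apply Rdiv_lt_0_compat; auto).
  assert (HAB : A * B = 1) by (unfold A, B; field; lra).
  set (Sup := d * INR P * INR P + Gs r (S P)).
  set (Slow := e * Gs r (S Q)).
  assert (Hw1 : forall t, (1 <= t)%nat -> 0 <= wt c t <= 1) by (intros t Ht; split; [left; apply wt_pos|apply wt_le1; auto]).
  assert (RBd := ratio_bound c Sup Slow (fun N => e * Gs r (S (Nat.max N Q)))).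
  assert (Hslow : 0 < Slow) by (unfold Slow; apply Rmult_lt_0_compat; [lra|apply Gs_pos]).
  assert (R1 : nu (fun x => Phi x * cpre (negb c) 1 x) <= B ^ 2 * Sup / Slow * nu (fun x => Phi x * cpre c 1 x)).
  { apply RBd; auto.
    - intros N. assert (G := GS3 r ltac:(lra) (wt c) d P ltac:(lra) h1 Hw1 N).
      unfold S1. unfold Sup.
      assert (HminP : INR (Nat.min N P) <= INR P) by (apply le_INR; lia).
      assert (Gs r (S (Nat.max N P)) >= 0) by (apply Rle_ge, Gs_nonneg; lra).
      assert (0 <= d * INR P) by (apply Rmult_le_pos; [lra|apply pos_INR]).
      assert (d * INR P * INR (Nat.min N P) <= d * INR P * INR P) by (apply Rmult_le_compat_l; auto).
      lra.
    - intros N. unfold Slow. assert (G := GS4 r ltac:(lra) (wt (negb c)) e Q ltac:(lra) h4 (fun t => Rlt_le _ _ (wt_pos (negb c) t)) N).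
      unfold S1. lra.
    - intros e0 He0. destruct (Gs_small r ltac:(lra) (e0 / e)) as [m Hm]. apply Rdiv_lt_0_compat; lra.
      exists m. assert (Gs r (S (Nat.max m Q)) <= Gs r m) by (apply Gs_decr; [lra|lia]).
      assert (e * Gs r m < e0).
      { apply (Rmult_lt_compat_l e) in Hm; [|lra]. replace (e * (e0 / e)) with e0 in Hm by (field; lra). auto. }
      assert (0 <= Gs r (S (Nat.max m Q))) by (apply Gs_nonneg; lra).
      nra. }
  assert (G := gibbs_small c).
  assert (Pc := nuPhi_c_pos c).
  assert (R2 : gibbs Phi nu (cpre (negb c) 1) <= B ^ 2 * Sup / Slow).
  { eapply Rle_trans; [apply G|]. apply (Rmult_le_reg_r (nu (fun x => Phi x * cpre c 1 x))); auto.
    unfold Rdiv at 1. rewrite Rmult_assoc, Rinv_l by lra. lra. }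
  eapply Rle_trans; [apply R2|]. unfold Slow, Sup.
  apply (key_bound P Q d e r A B W); auto; try lra.
apply rr_half.
Qed.
End K.

Open Scope R_scope.

Lemma fs_ge_term f n i : (forall j, 0 <= f j) -> (i < n)%nat -> f i <= fs f n.
Proof.
  intros Hf Hi. induction n; [lia|]. simpl. destruct (Nat.eq_dec i n).
  - subst. generalize (fs_nonneg f n Hf). lra.
  - specialize (IHn ltac:(lia)). specialize (Hf n). lra.
Qed.

Lemma cont_shiftn f k : continuous_Sigma f -> continuous_Sigma (fun x => f (shiftn k x)).
Proof.
  revert f; induction k; intros f Hf.
  - unfold shiftn. simpl. assert (E : (fun x : Sigma => f (fun i => x i)) = f) by (apply functional_extensionality; intros x; f_equal).
    rewrite E; auto.
  - assert (E : (fun x => f (shiftn (S k) x)) = (fun x => (fun y => f (shiftn k y)) (shift x))) by reflexivity.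
    rewrite E. apply (cont_shift (fun y => f (shiftn k y))). apply IHk. auto.
Qed.

Lemma fs_cont (g : nat -> Sigma -> R) n : (forall i, continuous_Sigma (g i)) -> continuous_Sigma (fun x => fs (fun i => g i x) n).
Proof. intros Hg. induction n; simpl. apply cont_const. apply cont_plus; auto. Qed.

Lemma fs_const a n : fs (fun _ => a) n = INR n * a.
Proof. induction n. simpl; ring. cbn [fs]. rewrite IHn, S_INR; ring. Qed.

Lemma Rabs_le_inv x y : Rabs x <= y -> - y <= x <= y.
Proof. intros H. generalize (Rle_abs x) (Rle_abs (- x)). rewrite Rabs_Ropp. lra. Qed.

Section Weak.
Variable mu : (Sigma -> R) -> R.
Hypothesis mu_plus : forall f g, continuous_Sigma f -> continuous_Sigma g -> mu (fun x => f x + g x) = mu f + mu g.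
Hypothesis mu_scal : forall c f, continuous_Sigma f -> mu (fun x => c * f x) = c * mu f.
Hypothesis mu_pos : forall f, continuous_Sigma f -> (forall x, 0 <= f x) -> 0 <= mu f.
Hypothesis mu_one : mu (fun _ => 1) = 1.
Hypothesis mu_shift : forall f, continuous_Sigma f -> mu (fun x => f (shift x)) = mu f.

Lemma mu_ext f g : (forall x, f x = g x) -> mu f = mu g.
Proof. intros E. f_equal. apply functional_extensionality; auto. Qed.
Lemma mu_const c : mu (fun _ => c) = c.
Proof. rewrite (mu_ext _ (fun _ => c * 1)) by (intros; ring). rewrite mu_scal by apply cont_const. rewrite mu_one; ring. Qed.
Lemma mu_minus f g : continuous_Sigma f -> continuous_Sigma g -> mu (fun x => f x - g x) = mu f - mu g.
Proof.
  intros Hf Hg. rewrite (mu_ext _ (fun x => f x + (-1) * g x)) by (intros; ring).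
  rewrite mu_plus, mu_scal; auto; [ring|]. apply cont_scal; auto.
Qed.
Lemma mu_mono f g : continuous_Sigma f -> continuous_Sigma g -> (forall x, f x <= g x) -> mu f <= mu g.
Proof.
  intros Hf Hg Hle. assert (0 <= mu (fun x => g x - f x)) by (apply mu_pos; [apply cont_minus; auto|intros x; specialize (Hle x); lra]).
  rewrite mu_minus in H; auto. lra.
Qed.
Lemma mu_shiftn f k : continuous_Sigma f -> mu (fun x => f (shiftn k x)) = mu f.
Proof.
  intros Hf. induction k.
  - apply mu_ext. intros x. f_equal.
  - rewrite <- IHk. change (fun x => f (shiftn (S k) x)) with (fun x => (fun y => f (shiftn k y)) (shift x)).
    apply mu_shift. apply cont_shiftn; auto.
Qed.
Lemma mu_fs (g : nat -> Sigma -> R) n : (forall i, continuous_Sigma (g i)) -> mu (fun x => fs (fun i => g i x) n) = fs (fun i => mu (g i)) n.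
Proof.
  intros Hg. induction n; simpl. apply mu_const.
  rewrite mu_plus; auto. rewrite IHn; auto. apply fs_cont; auto.
Qed.

Lemma mu_close (c : bool) f eps M N : continuous_Sigma f -> 0 < eps ->
  (forall x, Rabs (f x) <= M) -> (forall x y, agree N x y -> Rabs (f x - f y) < eps) ->
  Rabs (mu f - f (const_seq c)) <= eps + (2 * M * INR N) * mu (cpre (negb c) 1).
Proof.
  intros Hf He HM HN.
  assert (HM0 : 0 <= M) by (generalize (HM (const_seq c)) (Rabs_pos (f (const_seq c))); lra).
  set (h := fun x => eps + (2 * M) * fs (fun i => cpre (negb c) 1 (shiftn i x)) N).
  assert (Hh : continuous_Sigma h).
  { apply cont_plus. apply cont_const. apply cont_scal. apply (fs_cont (fun i x => cpre (negb c) 1 (shiftn i x))).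
    intros i. apply cont_shiftn, cont_cpre. }
  assert (Pw : forall x, Rabs (f x - f (const_seq c)) <= h x).
  { intros x. unfold h.
    assert (S0 : 0 <= fs (fun i => cpre (negb c) 1 (shiftn i x)) N) by (apply fs_nonneg; intros; apply cpre_01).
    destruct (classic (forall i, (i < N)%nat -> x i = c)) as [Hall|Hn].
    - left. assert (Rabs (f x - f (const_seq c)) < eps) by (apply HN; intros i Hi; rewrite Hall; auto).
      nra.
    - apply not_all_ex_not in Hn. destruct Hn as [i Hi].
      apply imply_to_and in Hi. destruct Hi as [Hi Hxi].
      assert (cpre (negb c) 1 (shiftn i x) = 1).
      { unfold cpre, ind, shiftn. simpl. rewrite Nat.add_0_r. destruct (x i), c; simpl; auto; congruence. }
      assert (1 <= fs (fun i => cpre (negb c) 1 (shiftn i x)) N).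
      { rewrite <- H. apply (fs_ge_term (fun i => cpre (negb c) 1 (shiftn i x))); auto. intros; apply cpre_01. }
      assert (Rabs (f x - f (const_seq c)) <= 2 * M).
      { unfold Rminus. eapply Rle_trans. apply Rabs_triang. rewrite Rabs_Ropp. generalize (HM x) (HM (const_seq c)). lra. }
      nra. }
  assert (Eh : mu h = eps + 2 * M * (INR N * mu (cpre (negb c) 1))).
  { unfold h. rewrite mu_plus, mu_scal, mu_const. rewrite (mu_fs (fun i x => cpre (negb c) 1 (shiftn i x))).
    f_equal. f_equal. rewrite (fs_ext _ (fun _ => mu (cpre (negb c) 1))). apply fs_const.
    intros i. apply (mu_shiftn (cpre (negb c) 1)). apply cont_cpre.
    intros i. apply cont_shiftn, cont_cpre.
    apply (fs_cont (fun i x => cpre (negb c) 1 (shiftn i x))). intros i. apply cont_shiftn, cont_cpre.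
    apply cont_const. apply cont_scal. apply (fs_cont (fun i x => cpre (negb c) 1 (shiftn i x))). intros i. apply cont_shiftn, cont_cpre. }
  rewrite <- (mu_const (f (const_seq c))) at 1. rewrite <- mu_minus by (auto; apply cont_const).
  assert (C1 : continuous_Sigma (fun x => f x - f (const_seq c))) by (apply cont_minus; auto; apply cont_const).
  assert (U : mu (fun x => f x - f (const_seq c)) <= mu h) by (apply mu_mono; auto; intros x; generalize (Pw x); intros P; apply Rabs_le_inv in P; lra).
  assert (L : mu (fun x => (-1) * h x) <= mu (fun x => f x - f (const_seq c))).
  { apply mu_mono; auto. apply cont_scal; auto. intros x; generalize (Pw x); intros P; apply Rabs_le_inv in P; lra. }
  rewrite mu_scal in L by auto.
  apply Rabs_le. rewrite Eh in U, L. split; nra.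
Qed.
End Weak.

Lemma weak_from_small (mu : nat -> (Sigma -> R) -> R) (c : bool) (L0 : nat) :
  (forall l, (L0 <= l)%nat ->
    (forall f g, continuous_Sigma f -> continuous_Sigma g -> mu l (fun x => f x + g x) = mu l f + mu l g) /\
    (forall a f, continuous_Sigma f -> mu l (fun x => a * f x) = a * mu l f) /\
    (forall f, continuous_Sigma f -> (forall x, 0 <= f x) -> 0 <= mu l f) /\
    mu l (fun _ => 1) = 1 /\
    (forall f, continuous_Sigma f -> mu l (fun x => f (shift x)) = mu l f)) ->
  (forall e, 0 < e -> exists L, forall l, (L <= l)%nat -> mu l (cpre (negb c) 1) <= e) ->
  forall f, continuous_Sigma f -> Un_cv (fun l => mu l f) (f (const_seq c)).
Proof.
  intros Hmu Hsmall f Hf eps He.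
  destruct (cont_bounded f Hf) as [M HM].
  assert (HM0 : 0 <= M) by (generalize (HM (const_seq c)) (Rabs_pos (f (const_seq c))); lra).
  destruct (unif_cont f Hf (eps / 2) ltac:(lra)) as [N HN].
  destruct (Hsmall (eps / (4 * (2 * M * INR N + 1)))) as [L HL].
  { apply Rdiv_lt_0_compat; [lra|]. generalize (pos_INR N); nra. }
  exists (L + L0)%nat. intros l Hl. unfold R_dist.
  destruct (Hmu l ltac:(lia)) as [P1 [P2 [P3 [P4 P5]]]].
  assert (B := mu_close (mu l) P1 P2 P3 P4 P5 c f (eps/2) M N Hf ltac:(lra) HM HN).
  specialize (HL l ltac:(lia)).
  assert (K0 : 0 <= 2 * M * INR N) by (generalize (pos_INR N); nra).
  assert ((2 * M * INR N) * mu l (cpre (negb c) 1) <= (2 * M * INR N) * (eps / (4 * (2 * M * INR N + 1)))) by (apply Rmult_le_compat_l; auto).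
  assert ((2 * M * INR N) * (eps / (4 * (2 * M * INR N + 1))) < eps / 2).
  { apply (Rmult_lt_reg_r (4 * (2 * M * INR N + 1))). lra.
    replace (2 * M * INR N * (eps / (4 * (2 * M * INR N + 1))) * (4 * (2 * M * INR N + 1))) with (2 * M * INR N * eps) by (field; lra).
    nra. }
  lra.
Qed.

Open Scope R_scope.

Lemma incr_mono (p : nat -> nat) : (forall k, (p k < p (S k))%nat) -> forall a b, (a <= b)%nat -> (p a <= p b)%nat.
Proof. intros Hp a b Hab. induction Hab; auto. specialize (Hp m). lia. Qed.

Lemma incr_ge (p : nat -> nat) : (forall k, (p k < p (S k))%nat) -> forall k, (k <= p k)%nat.
Proof. intros Hp k. induction k. lia. specialize (Hp k). lia. Qed.

Lemma block_exists (p : nat -> nat) : (forall k, (p k < p (S k))%nat) ->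
  forall n t, (1 <= t <= p n)%nat -> exists j, (prev p j < t <= p j)%nat.
Proof.
  intros Hp n. induction n; intros t Ht.
  - exists O. simpl. lia.
  - destruct (le_lt_dec t (p n)). apply IHn; lia. exists (S n). simpl. lia.
Qed.

Lemma eps_mono (eps : nat -> R) : (forall k, eps (S k) <= eps k) -> forall a b, (a <= b)%nat -> eps b <= eps a.
Proof. intros He a b Hab. induction Hab. lra. specialize (He m). lra. Qed.

Lemma thresholds (p : nat -> nat) (eps : nat -> R) (Hs : nat -> R) (beta : R) (k : nat) :
  (forall k, (p k < p (S k))%nat) -> (forall k, eps (S k) <= eps k) -> 0 <= beta ->
  (forall j n, (prev p j < n <= p j)%nat -> Hs n = eps j) ->
  (forall t, (1 <= t <= p k)%nat -> exp (- beta * Hs t) <= exp (- (beta * eps k))) /\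
  (forall t, (p k < t)%nat -> exp (- (beta * eps (S k))) <= exp (- beta * Hs t)).
Proof.
  intros Hp He Hb Hblk. split.
  - intros t Ht. destruct (block_exists p Hp k t Ht) as [j Hj]. rewrite (Hblk j t Hj).
    assert (j <= k)%nat.
    { destruct (le_lt_dec j k); auto. exfalso. destruct j; [lia|]. simpl in Hj.
      assert (p k <= p j)%nat by (apply incr_mono; auto; lia). lia. }
    assert (eps k <= eps j) by (apply eps_mono; auto).
    destruct (Req_dec (- beta * eps j) (- (beta * eps k))) as [E|E]. rewrite E; lra.
    left. apply exp_increasing. nra.
  - intros t Ht. destruct (block_exists p Hp t t) as [j Hj]. split; [lia|]. apply incr_ge; auto.
    rewrite (Hblk j t Hj).
    assert (S k <= j)%nat.
    { destruct (le_lt_dec (S k) j); auto. exfalso. assert (p j <= p k)%nat by (apply incr_mono; auto; lia). lia. }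
    assert (eps j <= eps (S k)) by (apply eps_mono; auto).
    destruct (Req_dec (- (beta * eps (S k))) (- beta * eps j)) as [E|E]. rewrite E; lra.
    left. apply exp_increasing. nra.
Qed.

Lemma final_arith eps0 : 0 < eps0 -> exists W tau rho, 1 <= W /\ 0 < tau /\ 0 < rho /\
  forall (P Q : nat) d e, (P < Q)%nat -> (1 <= Q)%nat -> 0 < d -> d * INR Q ^ 2 <= tau ->
    INR (S P) / INR (S Q) <= rho -> 1/2 <= e <= 1 ->
    d ^ 2 * INR Q ^ 2 + 2 * d * INR Q * INR (S Q) <= 1/2 /\
    ((4 * d ^ 2 * INR Q ^ 2 + 2) * (d * INR P * INR P) + 8 * d ^ 2 * INR Q ^ 2 * (INR (S P) * INR (S Q) + INR (S Q) ^ 2)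
      + (2 / e ^ 2) * (INR (S P) / INR (S Q) + 1 / W)) / e <= eps0.
Proof.
  intros He0. exists (1 + 64 / eps0), (Rmin (1/10) (eps0 / 68)), (eps0 / 64).
  assert (P64 : 0 < 64 / eps0) by (apply Rdiv_lt_0_compat; lra).
  split; [lra|]. split; [apply Rmin_pos; lra|]. split; [lra|].
  intros P Q d e HPQ HQ1 Hd Ht Hr He.
  set (Pr := INR P) in *. set (Qr := INR Q) in *.
  assert (HPr : 0 <= Pr) by apply pos_INR.
  assert (HPQr : Pr <= Qr) by (apply le_INR; lia).
  assert (HQr : 1 <= Qr) by (replace 1 with (INR 1) by reflexivity; apply le_INR; auto).
  assert (ESP : INR (S P) = Pr + 1) by apply S_INR. assert (ESQ : INR (S Q) = Qr + 1) by apply S_INR.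
  rewrite ESP, ESQ in *.
  set (t := d * Qr ^ 2) in *.
  assert (Ht1 : t <= 1/10) by (generalize (Rmin_l (1/10) (eps0/68)); lra).
  assert (Ht2 : t <= eps0 / 68) by (generalize (Rmin_r (1/10) (eps0/68)); lra).
  assert (Ht0 : 0 < t) by (unfold t; apply Rmult_lt_0_compat; auto; simpl; nra).
  assert (a1 : d ^ 2 * Qr ^ 2 <= t ^ 2).
  { unfold t. simpl. assert (Qr * Qr >= 1) by nra. assert (0 <= d * d) by nra. nra. }
  assert (a2 : d * Pr * Pr <= t) by (unfold t; simpl; assert (Pr * Pr <= Qr * Qr) by nra; nra).
  assert (a3 : d * Qr * (Qr + 1) <= 2 * t) by (unfold t; simpl; assert (0 <= d * Qr * (Qr - 1)) by (apply Rmult_le_pos; nra); nra).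
  split.
  - assert (t ^ 2 <= t / 10) by (simpl; nra). lra.
  - assert (Hq : 0 < Qr + 1) by lra.
    assert (a4 : (Pr + 1) * (Qr + 1) + (Qr + 1) ^ 2 <= 8 * Qr ^ 2) by (simpl; nra).
    assert (a5 : 8 * d ^ 2 * Qr ^ 2 * ((Pr + 1) * (Qr + 1) + (Qr + 1) ^ 2) <= 64 * t ^ 2).
    { assert (d ^ 2 * Qr ^ 2 * ((Pr + 1) * (Qr + 1) + (Qr + 1) ^ 2) <= d ^ 2 * Qr ^ 2 * (8 * Qr ^ 2)).
      { apply Rmult_le_compat_l; auto. simpl; nra. }
      unfold t. simpl in *. nra. }
    assert (a6 : (4 * d ^ 2 * Qr ^ 2 + 2) * (d * Pr * Pr) <= (4 * t ^ 2 + 2) * t).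
    { apply Rmult_le_compat; try nra. }
    assert (He2 : 2 / e ^ 2 <= 8).
    { assert (1/4 <= e ^ 2) by (simpl; nra). apply (Rmult_le_reg_r (e^2)). nra.
      unfold Rdiv. rewrite Rmult_assoc, Rinv_l by (simpl; nra). lra. }
    assert (HW : 1 / (1 + 64 / eps0) <= eps0 / 64).
    { apply (Rmult_le_reg_r (1 + 64 / eps0)). lra.
      unfold Rdiv. rewrite Rmult_assoc, Rinv_l by lra. 
      replace (eps0 * / 64 * (1 + 64 * / eps0)) with (eps0 / 64 + 1) by (field; lra). lra. }
    assert (a7 : (2 / e ^ 2) * ((Pr + 1) / (Qr + 1) + 1 / (1 + 64 / eps0)) <= 8 * (eps0 / 64 + eps0 / 64)).
    { apply Rmult_le_compat; try lra. unfold Rdiv; apply Rmult_le_pos; [lra|]. left; apply Rinv_0_lt_compat; simpl; nra.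
      apply Rplus_le_le_0_compat; unfold Rdiv; apply Rmult_le_pos; try lra; left; apply Rinv_0_lt_compat; lra. }
    set (T := (4 * d ^ 2 * Qr ^ 2 + 2) * (d * Pr * Pr) + 8 * d ^ 2 * Qr ^ 2 * ((Pr + 1) * (Qr + 1) + (Qr + 1) ^ 2)
      + 2 / e ^ 2 * ((Pr + 1) / (Qr + 1) + 1 / (1 + 64 / eps0))).
    assert (t ^ 2 <= t / 10) by (simpl; nra). assert (t ^ 3 <= t / 100) by (simpl; nra).
    assert ((4 * t^2 + 2) * t + 64 * t^2 <= 9 * t) by (replace ((4 * t^2 + 2) * t) with (4 * t^3 + 2 * t) by ring; lra).
    assert (T <= 3 * eps0 / 8) by (unfold T; lra).
    assert (0 <= T).
    { unfold T. repeat apply Rplus_le_le_0_compat. apply Rmult_le_pos. simpl; nra. apply Rmult_le_pos; [apply Rmult_le_pos|]; lra.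
      apply Rmult_le_pos. simpl; nra. simpl; nra.
      apply Rmult_le_pos. unfold Rdiv; apply Rmult_le_pos; [lra|]. left; apply Rinv_0_lt_compat; simpl; nra.
      apply Rplus_le_le_0_compat; unfold Rdiv; apply Rmult_le_pos; try lra; left; apply Rinv_0_lt_compat; lra. }
    apply (Rmult_le_reg_r e). lra. unfold Rdiv. rewrite Rmult_assoc, Rinv_l by lra. nra.
Qed.

Lemma glue (H : Sigma -> R) (H0 H1 : nat -> R) (beta lam : nat -> R) (Phi : nat -> Sigma -> R) (nu : nat -> (Sigma -> R) -> R)
  (eps : nat -> R) (kap : nat -> nat) (c : bool) (Ps Qs : nat -> nat) (L0 : nat) :
  reduced_double_well H H0 H1 ->
  (forall k, is_eigenfunction H (beta k) (lam k) (Phi k)) ->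
  (forall k, is_eigenmeasure H (beta k) (lam k) (nu k)) ->
  (forall k, 0 < eps k) ->
  (forall l, (L0 <= l)%nat -> 0 <= beta (kap l)) ->
  (forall l, (L0 <= l)%nat ->
     (forall t, (1 <= t <= Ps l)%nat -> wt H0 H1 (beta (kap l)) c t <= exp (- (beta (kap l) * eps (kap l)))) /\
     (forall t, (Ps l < t)%nat -> exp (- (beta (kap l) * eps (S (kap l)))) <= wt H0 H1 (beta (kap l)) c t) /\
     (forall t, (1 <= t <= Qs l)%nat -> wt H0 H1 (beta (kap l)) (negb c) t <= exp (- (beta (kap l) * eps (kap l)))) /\
     (forall t, (Qs l < t)%nat -> exp (- (beta (kap l) * eps (S (kap l)))) <= wt H0 H1 (beta (kap l)) (negb c) t)) ->
  (forall l, (Ps l < Qs l)%nat) -> (forall l, (l <= Qs l)%nat) ->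
  Un_cv (fun l => INR (Qs l) ^ 2 * exp (- (beta (kap l) * eps (kap l)))) 0 ->
  Un_cv (fun l => beta (kap l) * eps (S (kap l))) 0 ->
  (forall rho, 0 < rho -> exists L, forall l, (L <= l)%nat -> INR (S (Ps l)) / INR (S (Qs l)) <= rho) ->
  weak_cv_dirac (fun l => gibbs (Phi (kap l)) (nu (kap l))) (const_seq c).
Proof.
  intros RDW EF EM Heps Hb Hthr HPQ HQl Hd He Hr.
  intros f Hf.
  apply (weak_from_small (fun l => gibbs (Phi (kap l)) (nu (kap l))) c L0); auto.
  - intros l Hl. specialize (Hb l Hl).
    repeat split.
    + intros; apply (gibbs_plus H H0 H1 (beta (kap l)) (lam (kap l)) (Phi (kap l)) (nu (kap l))); auto.
    + intros; apply (gibbs_scal H H0 H1 (beta (kap l)) (lam (kap l)) (Phi (kap l)) (nu (kap l))); auto.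
    + intros; apply (gibbs_pos H H0 H1 (beta (kap l)) (lam (kap l)) (Phi (kap l)) (nu (kap l))); auto.
    + apply (gibbs_one H H0 H1 (beta (kap l)) (lam (kap l)) (Phi (kap l)) (nu (kap l))); auto.
    + intros; apply (gibbs_shift H H0 H1 (beta (kap l)) (lam (kap l)) (Phi (kap l)) (nu (kap l))); auto.
  - intros e0 He0.
    destruct (final_arith e0 He0) as [W [tau [rho [HW [Htau [Hrho Hfin]]]]]].
    destruct (Hd tau Htau) as [N1 HN1].
    destruct (He (1/2) ltac:(lra)) as [N2 HN2].
    destruct (Hr rho Hrho) as [N3 HN3].
    destruct (INR_unbounded (2 * W * exp (2 * W))) as [N4 HN4].
    exists (L0 + N1 + N2 + N3 + N4 + 1)%nat. intros l Hl.
    specialize (Hb l ltac:(lia)).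
    destruct (Hthr l ltac:(lia)) as [h1 [h2 [h3 h4]]].
    specialize (HN1 l ltac:(lia)). specialize (HN2 l ltac:(lia)).
    set (k := kap l) in *.
    set (d := exp (- (beta k * eps k))) in *. set (e := exp (- (beta k * eps (S k)))) in *.
    assert (Hd0 : 0 < d) by apply exp_pos.
    assert (Hd1 : d <= 1) by (apply exp_le_1; generalize (Heps k); nra).
    assert (He1 : e <= 1) by (apply exp_le_1; generalize (Heps (S k)); nra).
    assert (He2 : 1/2 <= e).
    { unfold R_dist in HN2. rewrite Rminus_0_r in HN2.
      destruct (Rabs_def2 _ _ HN2) as [A1 A2]. unfold e. generalize (exp_ineq1_le (- (beta k * eps (S k)))). lra. }
    assert (HQ1 : (1 <= Qs l)%nat) by (generalize (HQl l); lia).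
    assert (Htd : d * INR (Qs l) ^ 2 <= tau).
    { unfold R_dist in HN1. rewrite Rminus_0_r in HN1.
      destruct (Rabs_def2 _ _ HN1) as [A1 A2]. lra. }
    destruct (Hfin (Ps l) (Qs l) d e (HPQ l) HQ1 Hd0 Htd (HN3 l ltac:(lia)) ltac:(lra)) as [Hsm Hbd].
    eapply Rle_trans; [|apply Hbd].
    apply (per_k H H0 H1 (beta k) (lam k) (Phi k) (nu k) RDW (EF k) (EM k) Hb c (Ps l) (Qs l) d e W); auto; try lra.
    assert (HQ : 2 * W * exp (2 * W) < INR (S (Qs l))).
    { apply Rlt_le_trans with (INR N4). lra. apply le_INR. generalize (HQl l). lia. }
    assert (E2 : exp (4 * W) = exp (2 * W) * exp (2 * W)) by (rewrite <- exp_plus; f_equal; ring).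
    assert (0 < exp (2 * W)) by apply exp_pos.
    assert (0 < W * exp (2 * W)) by nra.
    assert (Hlt : W * exp (2 * W) < INR (S (Qs l)) * e).
    { assert (0 < INR (S (Qs l))) by (apply lt_0_INR; lia). nra. }
    assert (Hsq : (W * exp (2 * W)) * (W * exp (2 * W)) < (INR (S (Qs l)) * e) * (INR (S (Qs l)) * e)).
    { apply Rmult_le_0_lt_compat; lra. }
    rewrite E2.
    replace (W ^ 2 * (exp (2 * W) * exp (2 * W))) with ((W * exp (2 * W)) * (W * exp (2 * W))) by ring.
    replace (INR (S (Qs l)) ^ 2 * e ^ 2) with ((INR (S (Qs l)) * e) * (INR (S (Qs l)) * e)) by ring.
    exact Hsq.
Qed.

Lemma Un_cv_sub (u : nat -> R) L (kap : nat -> nat) : Un_cv u L -> (forall l, (l <= kap l)%nat) -> Un_cv (fun l => u (kap l)) L.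
Proof. intros Hu Hk e He. destruct (Hu e He) as [N HN]. exists N. intros n Hn. apply HN. specialize (Hk n). lia. Qed.

Lemma ratio_small (P Q : nat -> nat) : cv_infty (fun l => INR (Q l) / INR (P l)) -> (forall l, (1 <= P l)%nat) ->
  forall rho, 0 < rho -> exists L, forall l, (L <= l)%nat -> INR (S (P l)) / INR (S (Q l)) <= rho.
Proof.
  intros Hc HP rho Hrho. destruct (Hc (2 / rho)) as [N HN]. exists N. intros l Hl. specialize (HN l Hl).
  assert (Ha : 1 <= INR (P l)) by (replace 1 with (INR 1) by reflexivity; apply le_INR; auto).
  set (a := INR (P l)) in *. set (b := INR (Q l)) in *.
  assert (Hb0 : 0 <= b) by apply pos_INR.
  rewrite !S_INR. fold a b.
  assert (H2r : 0 < 2 / rho) by (apply Rdiv_lt_0_compat; lra).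
  assert (Hba : 2 / rho * a < b).
  { apply (Rmult_lt_compat_r a) in HN; [|lra]. unfold Rdiv at 2 in HN. rewrite Rmult_assoc, Rinv_l in HN by lra. lra. }
  assert (2 * a < rho * b).
  { apply (Rmult_lt_compat_l rho) in Hba; auto. replace (rho * (2 / rho * a)) with (2 * a) in Hba by (field; lra). lra. }
  apply (Rmult_le_reg_r (b + 1)). lra. unfold Rdiv. rewrite Rmult_assoc, Rinv_l by lra. nra.
Qed.

Theorem mainTheorem15
  (p q : nat -> nat) (eps beta : nat -> R)
  (H : Sigma -> R) (H0 H1 : nat -> R)
  (Phi : nat -> Sigma -> R) (lam : nat -> R) (nu : nat -> (Sigma -> R) -> R) :
  (forall k, (0 < p k)%nat) -> (forall k, (0 < q k)%nat) ->
  (forall k, (p k < p (S k))%nat) -> (forall k, (q k < q (S k))%nat) ->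
  (forall l, (p (2 * l) < q (2 * l))%nat /\ (q (2 * l) < q (2 * l + 1))%nat /\
             (q (2 * l + 1) < p (2 * l + 1))%nat /\ (p (2 * l + 1) < p (2 * l + 2))%nat) ->
  (forall k, 0 < eps k) -> (forall k, eps (S k) <= eps k) -> Un_cv eps 0 ->
  cv_infty beta ->
  Un_cv (fun k => (INR (p k))^2 * exp (- (beta k * eps k))) 0 ->
  Un_cv (fun k => (INR (q k))^2 * exp (- (beta k * eps k))) 0 ->
  Un_cv (fun k => beta k * eps (S k)) 0 ->
  cv_infty (fun l => INR (q (2 * l)%nat) / INR (p (2 * l)%nat)) ->
  cv_infty (fun l => INR (p (2 * l + 1)%nat) / INR (q (2 * l + 1)%nat)) ->
  (exists s, infinite_sum (fun k => INR (p k - prev p k) * eps k) s) ->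
  (exists s, infinite_sum (fun k => INR (q k - prev q k) * eps k) s) ->
  (forall k n, (prev p k < n <= p k)%nat -> H0 n = eps k) ->
  (forall k n, (prev q k < n <= q k)%nat -> H1 n = eps k) ->
  reduced_double_well H H0 H1 ->
  (forall k, is_eigenfunction H (beta k) (lam k) (Phi k)) ->
  (forall k, is_eigenmeasure H (beta k) (lam k) (nu k)) ->
  weak_cv_dirac (fun l => gibbs (Phi (2 * l)%nat) (nu (2 * l)%nat)) (const_seq false) /\
  weak_cv_dirac (fun l => gibbs (Phi (2 * l + 1)%nat) (nu (2 * l + 1)%nat)) (const_seq true).
Proof.
  intros Hp0 Hq0 Hpi Hqi Hord Heps Hepsd Hepsc Hbeta Hpd Hqd Hbe Hrq Hrp _ _ HB0 HB1 RDW EF EM.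
  destruct (Hbeta 0) as [N0 HN0].
  split.
  - apply (glue H H0 H1 beta lam Phi nu eps (fun l => (2 * l)%nat) false (fun l => p (2 * l)%nat) (fun l => q (2 * l)%nat) N0); auto.
    + intros l Hl. left. apply HN0. lia.
    + intros l Hl. assert (Hb : 0 <= beta (2 * l)%nat) by (left; apply HN0; lia).
      destruct (thresholds p eps H0 (beta (2 * l)%nat) (2 * l)%nat Hpi Hepsd Hb HB0) as [T1 T2].
      destruct (thresholds q eps H1 (beta (2 * l)%nat) (2 * l)%nat Hqi Hepsd Hb HB1) as [T3 T4].
      unfold wt, Hc. simpl negb. repeat split; auto.
    + intros l. apply Hord.
    + intros l. generalize (incr_ge q Hqi (2 * l)). lia.
    + apply (Un_cv_sub (fun k => INR (q k) ^ 2 * exp (- (beta k * eps k))) 0 (fun l => (2 * l)%nat)); auto. intros; lia.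
    + apply (Un_cv_sub (fun k => beta k * eps (S k)) 0 (fun l => (2 * l)%nat)); auto. intros; lia.
    + apply ratio_small; auto. intros l; apply Hp0.
  - apply (glue H H0 H1 beta lam Phi nu eps (fun l => (2 * l + 1)%nat) true (fun l => q (2 * l + 1)%nat) (fun l => p (2 * l + 1)%nat) N0); auto.
    + intros l Hl. left. apply HN0. lia.
    + intros l Hl. assert (Hb : 0 <= beta (2 * l + 1)%nat) by (left; apply HN0; lia).
      destruct (thresholds p eps H0 (beta (2 * l + 1)%nat) (2 * l + 1)%nat Hpi Hepsd Hb HB0) as [T1 T2].
      destruct (thresholds q eps H1 (beta (2 * l + 1)%nat) (2 * l + 1)%nat Hqi Hepsd Hb HB1) as [T3 T4].
      unfold wt, Hc. simpl negb. repeat split; auto.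
    + intros l. apply Hord.
    + intros l. generalize (incr_ge p Hpi (2 * l + 1)). lia.
    + apply (Un_cv_sub (fun k => INR (p k) ^ 2 * exp (- (beta k * eps k))) 0 (fun l => (2 * l + 1)%nat)); auto. intros; lia.
    + apply (Un_cv_sub (fun k => beta k * eps (S k)) 0 (fun l => (2 * l + 1)%nat)); auto. intros; lia.
    + apply ratio_small; auto. intros l; apply Hq0.
Qed.
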